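(* Let $X$ be the killed diffusion on $(0,\infty)$ described in the context. If $$\liminf_{z\to\infty}z^{-2}\bigl(b(z)^2+b'(z)+2\kappa(z)\bigr)>-\infty\quad\text{or}\quad\kappa\equiv0,$$ then the differential operator $\mathcal{L}^*\phi=\tfrac12\phi''-(b\phi)'-\kappa\phi$ is in the limit-point case at $\infty$.
   Context: $X$ is a one-dimensional diffusion on $(0,\infty)$ with diffusion coefficient identically $1$, drift $b\in C^1((0,\infty))$ and continuous killing rate $\kappa\ge0$; the endpoint $0$ is regular and the endpoint $\infty$ is inaccessible (natural or entrance). ''Limit-point case at $\infty$'' refers to Weyl's classification of singular Sturm–Liouville operators. *)

(* Defs.v *)
From Stdlib Require Import Reals.
From Coquelicot Require Import Coquelicot.
Open Scope R_scope.

(* Killed diffusion on (0,oo): generator L f = 1/2 f'' + b f' - kappa f.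
   Reference point c = 1. *)

Definition scale_dens (b : R -> R) (x : R) : R := exp (- 2 * RInt b 1 x).
Definition speed_dens (b : R -> R) (x : R) : R := 2 * exp (2 * RInt b 1 x).

Definition C1_pos (b : R -> R) : Prop :=
  forall x, 0 < x -> ex_derive b x /\ continuous (Derive b) x.

Definition regular_at_0 (b : R -> R) : Prop :=
  ex_RInt_gen (scale_dens b) (at_right 0) (at_point 1) /\
  ex_RInt_gen (speed_dens b) (at_right 0) (at_point 1).

(* oo accessible (exit or regular) iff int_1^oo (M(x)-M(1)) dS(x) < oo;
   inaccessible (natural or entrance) otherwise. *)
Definition inaccessible_at_infty (b : R -> R) : Prop :=
  ~ ex_RInt_gen (fun x => scale_dens b x * RInt (speed_dens b) 1 x)
      (at_point 1) (Rbar_locally p_infty).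

Definition Lstar (b kappa u : R -> R) (x : R) : R :=
  / 2 * Derive (Derive u) x - Derive (fun y => b y * u y) x - kappa x * u x.

Definition twice_diff_pos (u : R -> R) : Prop :=
  forall x, 0 < x -> ex_derive u x /\ ex_derive (Derive u) x.

(* phi = u + i v solves L* phi = lambda phi on (0,oo), lambda = alpha + i beta. *)
Definition is_eigensol (b kappa : R -> R) (alpha beta : R) (u v : R -> R) : Prop :=
  twice_diff_pos u /\ twice_diff_pos v /\
  forall x, 0 < x ->
    Lstar b kappa u x = alpha * u x - beta * v x /\
    Lstar b kappa v x = beta * u x + alpha * v x.

(* |phi|^2 integrable near oo w.r.t. the symmetrizing weight s(x) dx of L*. *)
Definition L2_near_infty (b : R -> R) (u v : R -> R) : Prop :=
  ex_RInt_gen (fun x => (u x ^ 2 + v x ^ 2) * scale_dens b x)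
    (at_point 1) (Rbar_locally p_infty).

Definition limit_circle_at_infty (b kappa : R -> R) : Prop :=
  exists alpha beta : R, forall u v : R -> R,
    is_eigensol b kappa alpha beta u v -> L2_near_infty b u v.

Definition limit_point_at_infty (b kappa : R -> R) : Prop :=
  ~ limit_circle_at_infty b kappa.

(* Main.v *)
Require Import Defs.
From Stdlib Require Import Reals Lra Lia Psatz Factorial ZArith.
From Coquelicot Require Import Coquelicot.
Open Scope R_scope.

Lemma cont_plus (f g : R -> R) x : continuous f x -> continuous g x -> continuous (fun t => f t + g t) x.
Proof. intros; apply (continuous_plus f g); auto. Qed.
Lemma cont_mult (f g : R -> R) x : continuous f x -> continuous g x -> continuous (fun t => f t * g t) x.
Proof. intros; apply (continuous_mult f g); auto. Qed.
Lemma cont_opp (f : R -> R) x : continuous f x -> continuous (fun t => - f t) x.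
Proof. intros; apply (continuous_opp f); auto. Qed.
Lemma cont_minus (f g : R -> R) x : continuous f x -> continuous g x -> continuous (fun t => f t - g t) x.
Proof. intros; apply cont_plus; auto; apply cont_opp; auto. Qed.
Lemma cont_abs (f : R -> R) x : continuous f x -> continuous (fun t => Rabs (f t)) x.
Proof. intros; apply continuous_Rabs_comp; auto. Qed.
Lemma cont_const (c x : R) : continuous (fun _ : R => c) x.
Proof. apply continuous_const. Qed.
Lemma cont_id (x : R) : continuous (fun t : R => t) x.
Proof. apply continuous_id. Qed.

Lemma loc_pos x : 0 < x -> locally x (fun y => 0 < y).
Proof.
  intros Hx. apply (locally_interval _ x 0 p_infty); simpl; auto.
Qed.

Lemma exRc (f : R -> R) a b : (forall z, Rmin a b <= z <= Rmax a b -> continuous f z) -> ex_RInt f a b.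
Proof. intros H. apply (ex_RInt_continuous (V:=R_CompleteNormedModule)); auto. Qed.

Lemma ex_RInt_cont (f : R -> R) a b : 0 < a -> 0 < b -> (forall t, 0 < t -> continuous f t) -> ex_RInt f a b.
Proof.
  intros Ha Hb Hf. apply exRc. intros z Hz. apply Hf.
  destruct Hz as [Hz _]. unfold Rmin in Hz; destruct (Rle_dec a b); lra.
Qed.

Lemma RInt_derive_pos (G : R -> R) x : 0 < x -> (forall t, 0 < t -> continuous G t) ->
  is_derive (fun y => RInt G 1 y) x (G x).
Proof.
  intros Hx HG. apply is_derive_RInt with (a := 1).
  - generalize (loc_pos x Hx). apply filter_imp. intros y Hy.
    apply RInt_correct. apply ex_RInt_cont; auto; lra.
  - apply HG; auto.
Qed.

Lemma RInt_poly_pos (B : R) (n : nat) (x : R) : 1 <= x ->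
  RInt (fun t => B * (t - 1) ^ n) 1 x = B * (x - 1) ^ (S n) / INR (S n).
Proof.
  intros H1.
  assert (HSn : 0 < INR (S n)) by (apply lt_0_INR; lia).
  set (k := INR (S n)) in *.
  apply is_RInt_unique.
  replace (B * (x - 1) ^ (S n) / k) with (B * (x - 1) ^ (S n) / k - B * (1 - 1) ^ (S n) / k).
  2:{ replace (1 - 1) with 0 by ring. rewrite pow_i by lia. field. lra. }
  apply (is_RInt_derive (fun t => B * (t - 1) ^ (S n) / k)).
  - intros t _. auto_derive; auto. change (match n with 0%nat => 1 | S _ => INR n + 1 end) with (INR (S n)). fold k. replace (t + - (1)) with (t - 1) by ring. field.
    lra.
  - intros t _. apply cont_mult. apply cont_const. apply continuous_ext with (f := fun t => (t - 1) ^ n).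
    { intros; reflexivity. }
    induction n. simpl. apply cont_const. simpl. apply cont_mult. apply cont_minus. apply cont_id. apply cont_const.
    apply IHn. apply lt_0_INR; lia. 
Qed.

Lemma cont_pow (f : R -> R) n x : continuous f x -> continuous (fun t => f t ^ n) x.
Proof.
  intros Hf. induction n. simpl. apply cont_const. simpl. apply cont_mult; auto.
Qed.

Lemma RInt_poly_neg (B : R) (n : nat) (x : R) : x <= 1 ->
  RInt (fun t => B * (1 - t) ^ n) x 1 = B * (1 - x) ^ (S n) / INR (S n).
Proof.
  intros H1.
  assert (HSn : 0 < INR (S n)) by (apply lt_0_INR; lia).
  set (k := INR (S n)) in *.
  apply is_RInt_unique.
  replace (B * (1 - x) ^ (S n) / k) with ((- B * (1 - 1) ^ (S n) / k) - (- B * (1 - x) ^ (S n) / k)).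
  2:{ replace (1 - 1) with 0 by ring. rewrite pow_i by lia. field. lra. }
  apply (is_RInt_derive (fun t => - B * (1 - t) ^ (S n) / k)).
  - intros t _. auto_derive; auto. change (match n with 0%nat => 1 | S _ => INR n + 1 end) with (INR (S n)). fold k. replace (1 + - t) with (1 - t) by ring. field. lra.
  - intros t _. apply cont_mult. apply cont_const. apply cont_pow. apply cont_minus. apply cont_const. apply cont_id.
Qed.

Lemma RInt_pow_bound (f : R -> R) (x B : R) (n : nat) :
  (forall t, Rmin 1 x <= t <= Rmax 1 x -> continuous f t) ->
  (forall t, Rmin 1 x <= t <= Rmax 1 x -> Rabs (f t) <= B * Rabs (t - 1) ^ n) ->
  Rabs (RInt f 1 x) <= B * Rabs (x - 1) ^ (S n) / INR (S n).
Proof.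
  intros Hc Hb.
  destruct (Rle_dec 1 x) as [H1|H1].
  - assert (Ef : ex_RInt f 1 x) by (apply exRc; auto).
    eapply Rle_trans. apply abs_RInt_le; auto.
    rewrite Rabs_right by lra. rewrite <- RInt_poly_pos by auto.
    apply RInt_le; auto.
    + apply exRc. intros; apply cont_abs; auto.
    + apply exRc. intros; apply cont_mult. apply cont_const. apply cont_pow. apply cont_minus. apply cont_id. apply cont_const.
    + intros t Ht. rewrite <- (Rabs_right (t - 1)) by lra. apply Hb.
      unfold Rmin, Rmax; destruct (Rle_dec 1 x); lra.
  - assert (Ef : ex_RInt f x 1) by (apply exRc; intros; apply Hc; unfold Rmin, Rmax in *; destruct (Rle_dec 1 x), (Rle_dec x 1); lra).
    rewrite <- opp_RInt_swap by auto. replace (Rabs (opp (RInt f x 1))) with (Rabs (RInt f x 1)) by (unfold opp; simpl; now rewrite Rabs_Ropp).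
    eapply Rle_trans. apply abs_RInt_le; auto. lra.
    rewrite Rabs_left by lra. replace (- (x - 1)) with (1 - x) by ring. rewrite <- RInt_poly_neg by lra.
    apply RInt_le; auto. lra.
    + apply exRc. intros; apply cont_abs; apply Hc; unfold Rmin, Rmax in *; destruct (Rle_dec 1 x), (Rle_dec x 1); lra.
    + apply exRc. intros; apply cont_mult. apply cont_const. apply cont_pow. apply cont_minus. apply cont_const. apply cont_id.
    + intros t Ht. replace (1 - t) with (Rabs (t - 1)) by (rewrite Rabs_left; lra). apply Hb.
      unfold Rmin, Rmax; destruct (Rle_dec 1 x); lra.
Qed.

Lemma cont_eps (f : R -> R) x : continuous f x -> forall eps, 0 < eps -> locally x (fun y => Rabs (f y - f x) < eps).
Proof.
  intros Hf eps He. apply filterlim_locally with (eps := mkposreal eps He) in Hf.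
  exact Hf.
Qed.

Lemma cont_of_eps (f : R -> R) x : (forall eps, 0 < eps -> locally x (fun y => Rabs (f y - f x) < eps)) -> continuous f x.
Proof.
  intros H. apply filterlim_locally. intros eps. apply (H eps (cond_pos eps)).
Qed.

Lemma loc_ball x d : 0 < d -> locally x (fun y => Rabs (y - x) < d).
Proof. intros Hd. exists (mkposreal d Hd). intros y Hy. exact Hy. Qed.

Definition S4 (y : nat -> R) := Rabs (y 0%nat) + Rabs (y 1%nat) + Rabs (y 2%nat) + Rabs (y 3%nat).

Definition Fs (a : R -> R) (c t : R) (y : nat -> R) (i : nat) : R :=
  match i with
  | 0%nat => y 1%nat
  | 1%nat => a t * y 0%nat - c * y 2%nat
  | 2%nat => y 3%nat
  | _ => a t * y 2%nat + c * y 0%nat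
  end.

Lemma Fs_lin a c t y z i : Fs a c t y i - Fs a c t z i = Fs a c t (fun j => y j - z j) i.
Proof. destruct i as [|[|[|i]]]; simpl; ring. Qed.

Lemma S4_ge0 y : 0 <= S4 y.
Proof. unfold S4. generalize (Rabs_pos (y 0%nat)) (Rabs_pos (y 1%nat)) (Rabs_pos (y 2%nat)) (Rabs_pos (y 3%nat)). lra. Qed.

Lemma Fs_bound a c t y i : Rabs (Fs a c t y i) <= (1 + Rabs (a t) + Rabs c) * S4 y.
Proof.
  unfold S4.
  generalize (Rabs_pos (y 0%nat)) (Rabs_pos (y 1%nat)) (Rabs_pos (y 2%nat)) (Rabs_pos (y 3%nat)) (Rabs_pos (a t)) (Rabs_pos c). intros.
  destruct i as [|[|[|i]]]; simpl.
  - nra.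
  - eapply Rle_trans. apply Rabs_triang. rewrite Rabs_Ropp, !Rabs_mult. nra.
  - nra.
  - eapply Rle_trans. apply Rabs_triang. rewrite !Rabs_mult. nra.
Qed.

Lemma Fs_cont a c (Y : nat -> R -> R) i t : continuous a t -> (forall j, (j < 4)%nat -> continuous (Y j) t) ->
  continuous (fun s => Fs a c s (fun j => Y j s) i) t.
Proof.
  intros Ha HY. destruct i as [|[|[|i]]]; simpl.
  - apply HY; lia.
  - apply cont_minus; apply cont_mult; auto; try apply cont_const; apply HY; lia.
  - apply HY; lia.
  - apply cont_plus; apply cont_mult; auto; try apply cont_const; apply HY; lia.
Qed.

Fixpoint pic (a : R -> R) (c : R) (y0 : nat -> R) (n : nat) : nat -> R -> R :=
  match n with
  | O => fun i _ => y0 i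
  | S m => fun i x => y0 i + RInt (fun t => Fs a c t (fun j => pic a c y0 m j t) i) 1 x
  end.

Lemma pic_cont (a : R -> R) c y0 : (forall t, 0 < t -> continuous a t) ->
  forall n i x, 0 < x -> continuous (pic a c y0 n i) x.
Proof.
  intros Ha n. induction n; intros i x Hx; simpl.
  - apply cont_const.
  - apply cont_plus. apply cont_const.
    apply (ex_derive_continuous (K:=R_AbsRing) (V:=R_NormedModule) (fun y => RInt _ 1 y)). eexists. apply RInt_derive_pos; auto.
    intros t Ht. apply Fs_cont; auto.
Qed.

Lemma pic_step (a : R -> R) c y0 n i x : 0 < x -> (forall t, 0 < t -> continuous a t) ->
  pic a c y0 (S (S n)) i x - pic a c y0 (S n) i x =
  RInt (fun t => Fs a c t (fun j => pic a c y0 (S n) j t - pic a c y0 n j t) i) 1 x.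
Proof.
  intros Hx Ha.
  transitivity (RInt (fun t => Fs a c t (fun j => pic a c y0 (S n) j t) i - Fs a c t (fun j => pic a c y0 n j t) i) 1 x).
  2:{ apply RInt_ext. intros; apply Fs_lin. }
  change (pic a c y0 (S (S n)) i x) with (y0 i + RInt (fun t => Fs a c t (fun j => pic a c y0 (S n) j t) i) 1 x).
  change (pic a c y0 (S n) i x) with (y0 i + RInt (fun t => Fs a c t (fun j => pic a c y0 n j t) i) 1 x).
  rewrite (RInt_minus (V:=R_CompleteNormedModule)).
  - simpl. unfold minus, plus, opp; simpl. ring.
  - apply ex_RInt_cont; try lra. intros; apply Fs_cont; auto. intros; apply pic_cont; auto.
  - apply ex_RInt_cont; try lra. intros; apply Fs_cont; auto. intros; apply pic_cont; auto.
Qed.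

Lemma S4_le y B : (forall j, (j < 4)%nat -> Rabs (y j) <= B) -> S4 y <= 4 * B.
Proof.
  intros H. unfold S4. generalize (H 0%nat ltac:(lia)) (H 1%nat ltac:(lia)) (H 2%nat ltac:(lia)) (H 3%nat ltac:(lia)). lra.
Qed.

Lemma between_lr l r x t : l <= 1 -> 1 <= r -> l <= x <= r -> Rmin 1 x <= t <= Rmax 1 x -> l <= t <= r.
Proof. intros. unfold Rmin, Rmax in *. destruct (Rle_dec 1 x); lra. Qed.

Lemma between_pos x t : 0 < x -> Rmin 1 x <= t <= Rmax 1 x -> 0 < t.
Proof. intros. unfold Rmin, Rmax in *. destruct (Rle_dec 1 x); lra. Qed.

Lemma pic_diff (a : R -> R) c y0 l r K : 0 < l -> l <= 1 -> 1 <= r ->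
  (forall t, 0 < t -> continuous a t) ->
  (forall t, l <= t <= r -> 1 + Rabs (a t) + Rabs c <= K) ->
  forall n x, l <= x <= r ->
  S4 (fun j => pic a c y0 (S n) j x - pic a c y0 n j x) <=
    S4 y0 * (4 * K) ^ (S n) * Rabs (x - 1) ^ (S n) / INR (fact (S n)).
Proof.
  intros Hl Hl1 Hr Ha HK.
  assert (K1 : 1 <= K) by (generalize (HK 1 ltac:(lra)) (Rabs_pos (a 1)) (Rabs_pos c); lra).
  generalize (S4_ge0 y0); intro HD.
  induction n; intros x Hx.
  - replace (S4 y0 * (4 * K) ^ 1 * Rabs (x - 1) ^ 1 / INR (fact 1)) with (4 * ((K * S4 y0) * Rabs (x - 1) ^ 1 / INR 1)) by (simpl; field).
    apply S4_le. intros j Hj.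
    change (pic a c y0 1 j x - pic a c y0 0 j x) with (y0 j + RInt (fun t => Fs a c t (fun j => y0 j) j) 1 x - y0 j).
    unfold Rminus. rewrite (Rplus_comm (y0 j)), Rplus_assoc, Rplus_opp_r, Rplus_0_r.
    apply RInt_pow_bound.
    + intros t Ht. apply Fs_cont. apply Ha. apply (between_pos x); auto; lra.
      intros; apply cont_const.
    + intros t Ht. simpl. rewrite Rmult_1_r. eapply Rle_trans. apply Fs_bound.
      apply Rmult_le_compat_r. apply S4_ge0. apply HK. eapply between_lr; eauto.
  - set (M := K * (S4 y0 * (4 * K) ^ S n / INR (fact (S n)))).
    replace (S4 y0 * (4 * K) ^ S (S n) * Rabs (x - 1) ^ S (S n) / INR (fact (S (S n)))) with
      (4 * (M * Rabs (x - 1) ^ S (S n) / INR (S (S n)))).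
    2:{ unfold M. change (fact (S (S n))) with (S (S n) * fact (S n))%nat. rewrite mult_INR.
        change ((4 * K) ^ S (S n)) with ((4 * K) * (4 * K) ^ (S n)). field.
        split. apply not_0_INR. apply fact_neq_0. apply not_0_INR. lia. }
    apply S4_le. intros j Hj.
    rewrite pic_step; auto. 2: lra.
    apply RInt_pow_bound.
    + intros t Ht. apply Fs_cont. apply Ha. apply (between_pos x); auto; lra.
      intros; apply cont_minus; apply pic_cont; auto; apply (between_pos x); auto; lra.
    + intros t Ht. assert (Ht' : l <= t <= r) by (eapply between_lr; eauto).
      eapply Rle_trans. apply Fs_bound. unfold M.
      apply Rle_trans with (K * (S4 y0 * (4 * K) ^ S n * Rabs (t - 1) ^ S n / INR (fact (S n)))).
      apply Rmult_le_compat. generalize (Rabs_pos (a t)) (Rabs_pos c); lra. apply S4_ge0. apply HK; auto. apply IHn; auto.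
      right. field. apply not_0_INR. apply fact_neq_0.
Qed.

Lemma tail_small (cc : nat -> R) N0 : (forall n, 0 <= cc n) -> (forall n, (N0 <= n)%nat -> cc (S n) <= cc n / 2) ->
  forall eps, 0 < eps -> exists N, (N0 <= N)%nat /\ forall n, (N <= n)%nat -> cc n < eps.
Proof.
  intros H0 Hh eps He.
  assert (Hk : forall k, cc (N0 + k)%nat <= cc N0 * (/2) ^ k).
  { induction k. rewrite Nat.add_0_r. simpl; lra.
    replace (N0 + S k)%nat with (S (N0 + k)) by lia. eapply Rle_trans. apply Hh; lia.
    simpl. lra. }
  assert (Hy : 0 < eps / (cc N0 + 1)) by (apply Rdiv_lt_0_compat; auto; generalize (H0 N0); lra).
  destruct (pow_lt_1_zero (/2) ltac:(rewrite Rabs_right; lra) _ Hy) as [N1 HN1].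
  exists (N0 + N1)%nat. split. lia. intros n Hn.
  replace n with (N0 + (n - N0))%nat by lia.
  eapply Rle_lt_trans. apply Hk.
  specialize (HN1 (n - N0)%nat ltac:(lia)). rewrite Rabs_right in HN1.
  2:{ apply Rle_ge, pow_le; lra. }
  generalize (H0 N0); intro.
  apply Rle_lt_trans with (cc N0 * (eps / (cc N0 + 1))).
  apply Rmult_le_compat_l; lra.
  unfold Rdiv. rewrite <- Rmult_assoc, (Rmult_comm (cc N0)), Rmult_assoc.
  rewrite <- (Rmult_1_r eps) at 2. apply Rmult_lt_compat_l; auto.
  apply (Rmult_lt_reg_l (cc N0 + 1)). lra. field_simplify; lra.
Qed.

Lemma cauchy_bound (u cc : nat -> R) N0 : (forall n, (N0 <= n)%nat -> cc (S n) <= cc n / 2) ->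
  (forall n, (N0 <= n)%nat -> Rabs (u (S n) - u n) <= cc n) ->
  forall n k, (N0 <= n)%nat -> Rabs (u (n + k)%nat - u n) <= 2 * cc n - 2 * cc (n + k)%nat.
Proof.
  intros Hh Hu n k Hn. induction k.
  - rewrite Nat.add_0_r. replace (u n - u n) with 0 by ring. rewrite Rabs_R0. lra.
  - replace (n + S k)%nat with (S (n + k)) by lia.
    replace (u (S (n + k)) - u n) with ((u (S (n + k)) - u (n + k)%nat) + (u (n + k)%nat - u n)) by ring.
    eapply Rle_trans. apply Rabs_triang.
    generalize (Hu (n + k)%nat ltac:(lia)) (Hh (n + k)%nat ltac:(lia)). lra.
Qed.

Lemma lim_bound (u cc : nat -> R) N0 : (forall n, 0 <= cc n) -> (forall n, (N0 <= n)%nat -> cc (S n) <= cc n / 2) ->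
  (forall n, (N0 <= n)%nat -> Rabs (u (S n) - u n) <= cc n) ->
  is_lim_seq u (Lim_seq u) /\ forall n, (N0 <= n)%nat -> Rabs (real (Lim_seq u) - u n) <= 2 * cc n.
Proof.
  intros H0 Hh Hu.
  assert (Hc := cauchy_bound u cc N0 Hh Hu).
  assert (Ex : ex_finite_lim_seq u).
  { apply ex_lim_seq_cauchy_corr. intros eps.
    destruct (tail_small cc N0 H0 Hh (eps / 4)) as [N [HN1 HN2]]. generalize (cond_pos eps); lra.
    exists N. intros n m Hn Hm.
    replace (u n - u m) with ((u (N + (n - N))%nat - u N) - (u (N + (m - N))%nat - u N)).
    2:{ replace (N + (n - N))%nat with n by lia. replace (N + (m - N))%nat with m by lia. ring. }
    eapply Rle_lt_trans. apply Rabs_triang. rewrite Rabs_Ropp.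
    generalize (Hc N (n - N)%nat HN1) (Hc N (m - N)%nat HN1) (HN2 N (le_n _)) (H0 (N + (n - N))%nat) (H0 (N + (m - N))%nat). lra. }
  destruct Ex as [l Hl].
  rewrite (is_lim_seq_unique _ _ Hl). split. auto.
  intros n Hn. simpl.
  apply Rnot_lt_le. intros Hlt.
  set (e := Rabs (l - u n) - 2 * cc n).
  assert (He : 0 < e) by (unfold e; lra).
  apply is_lim_seq_spec in Hl. destruct (Hl (mkposreal e He)) as [M HM]. simpl in HM.
  specialize (HM (n + M)%nat ltac:(lia)). specialize (Hc n M Hn).
  assert (Rabs (l - u n) <= Rabs (u (n + M)%nat - l) + Rabs (u (n + M)%nat - u n)).
  { replace (l - u n) with (- (u (n + M)%nat - l) + (u (n + M)%nat - u n)) by ring.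
    eapply Rle_trans. apply Rabs_triang. rewrite Rabs_Ropp. lra. }
  generalize (H0 (n + M)%nat). unfold e in HM. lra.
Qed.

Lemma ratio_half (q D : R) : 0 <= q -> 0 <= D -> exists N0, forall n, (N0 <= n)%nat ->
  D * q ^ (S (S n)) / INR (fact (S (S n))) <= (D * q ^ (S n) / INR (fact (S n))) / 2.
Proof.
  intros Hq HD.
  destruct (archimed (2 * q)) as [Hup _].
  exists (Z.to_nat (up (2 * q))). intros n Hn.
  assert (HN : 2 * q <= INR n).
  { apply le_INR in Hn. rewrite INR_IZR_INZ, Z2Nat.id in Hn. lra.
    apply le_IZR. simpl. lra. }
  change (fact (S (S n))) with (S (S n) * fact (S n))%nat. rewrite mult_INR.
  change (q ^ S (S n)) with (q * q ^ S n).
  assert (Hf : 0 < INR (fact (S n))) by (apply lt_0_INR, lt_O_fact).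
  assert (Hp : 0 <= q ^ S n) by (apply pow_le; auto).
  rewrite !S_INR.
  apply (Rmult_le_reg_r (2 * ((INR n + 1 + 1) * INR (fact (S n))))). 
  { apply Rmult_lt_0_compat. lra. apply Rmult_lt_0_compat; auto. generalize (pos_INR n); lra. }
  assert (0 <= D * q ^ S n) by (apply Rmult_le_pos; auto).
  generalize (pos_INR n); intro.
  field_simplify. nra. lra. split; lra.
Qed.

Definition Ylim (a : R -> R) c y0 i x := real (Lim_seq (fun n => pic a c y0 n i x)).

Lemma compact_conv (a : R -> R) c y0 l r : 0 < l -> l <= 1 -> 1 <= r ->
  (forall t, 0 < t -> continuous a t) ->
  exists cc N0 K, (forall n, 0 <= cc n) /\ (forall n, (N0 <= n)%nat -> cc (S n) <= cc n / 2) /\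
    (forall t, l <= t <= r -> 1 + Rabs (a t) + Rabs c <= K) /\ 0 <= K /\
    (forall n i x, (N0 <= n)%nat -> (i < 4)%nat -> l <= x <= r -> Rabs (Ylim a c y0 i x - pic a c y0 n i x) <= 2 * cc n).
Proof.
  intros Hl Hl1 Hr Ha.
  destruct (continuity_ab_maj (fun t => 1 + Rabs (a t) + Rabs c) l r ltac:(lra)) as [Mx [HM _]].
  { intros t Ht. apply continuity_pt_filterlim. change (continuous (fun t => 1 + Rabs (a t) + Rabs c) t). apply cont_plus. apply cont_plus. apply cont_const.
    apply cont_abs, Ha; lra. apply cont_const. }
  set (K := 1 + Rabs (a Mx) + Rabs c) in *.
  assert (HK0 : 0 <= K) by (unfold K; generalize (Rabs_pos (a Mx)) (Rabs_pos c); lra).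
  set (R0 := r - l). set (q := 4 * K * R0). set (D := S4 y0).
  assert (Hq : 0 <= q) by (unfold q, R0; apply Rmult_le_pos; lra).
  assert (HD : 0 <= D) by apply S4_ge0.
  set (cc := fun n => D * q ^ (S n) / INR (fact (S n))).
  assert (Hc0 : forall n, 0 <= cc n).
  { intros n. unfold cc. apply Rmult_le_pos. apply Rmult_le_pos; auto. apply pow_le; auto.
    apply Rlt_le, Rinv_0_lt_compat, lt_0_INR, lt_O_fact. }
  destruct (ratio_half q D Hq HD) as [N0 HN0].
  exists cc, N0, K. split; auto. split. intros n Hn; apply HN0; auto.
  split. auto. split. auto.
  intros n i x Hn Hi Hx.
  assert (Hu : forall m, (N0 <= m)%nat -> Rabs (pic a c y0 (S m) i x - pic a c y0 m i x) <= cc m).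
  { intros m _.
    eapply Rle_trans. 2: eapply Rle_trans. 2: apply (pic_diff a c y0 l r K Hl Hl1 Hr Ha HM m x Hx).
    - unfold S4. destruct i as [|[|[|[|i]]]]; try lia;
      match goal with |- Rabs ?A <= _ => generalize (Rabs_pos A) end;
      generalize (Rabs_pos (pic a c y0 (S m) 0 x - pic a c y0 m 0 x)) (Rabs_pos (pic a c y0 (S m) 1 x - pic a c y0 m 1 x))
        (Rabs_pos (pic a c y0 (S m) 2 x - pic a c y0 m 2 x)) (Rabs_pos (pic a c y0 (S m) 3 x - pic a c y0 m 3 x)); lra.
    - unfold cc. unfold Rdiv. apply Rmult_le_compat_r. apply Rlt_le, Rinv_0_lt_compat, lt_0_INR, lt_O_fact.
      rewrite Rmult_assoc. apply Rmult_le_compat_l; auto.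
      rewrite <- Rpow_mult_distr. apply pow_incr. split. apply Rmult_le_pos. lra. apply Rabs_pos.
      unfold q. apply Rmult_le_compat_l. lra. unfold R0. unfold Rabs; destruct (Rcase_abs (x - 1)); lra. }
  destruct (lim_bound (fun m => pic a c y0 m i x) cc N0 Hc0 (fun m Hm => HN0 m Hm) Hu) as [_ Hb].
  apply Hb; auto.
Qed.

Lemma small_eq (d : R) : (forall eps, 0 < eps -> Rabs d < eps) -> d = 0.
Proof.
  intros H. destruct (Req_dec d 0); auto. exfalso.
  specialize (H (Rabs d) (Rabs_pos_lt d H0)). lra.
Qed.

Lemma Ylim_cont (a : R -> R) c y0 : (forall t, 0 < t -> continuous a t) ->
  forall i x, (i < 4)%nat -> 0 < x -> continuous (Ylim a c y0 i) x.
Proof.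
  intros Ha i x Hi Hx.
  set (l := Rmin x 1 / 2). set (r := Rmax x 1 + 1).
  assert (Hl : 0 < l) by (unfold l, Rmin; destruct (Rle_dec x 1); lra).
  assert (Hl1 : l <= 1) by (unfold l, Rmin; destruct (Rle_dec x 1); lra).
  assert (Hr : 1 <= r) by (unfold r, Rmax; destruct (Rle_dec x 1); lra).
  destruct (compact_conv a c y0 l r Hl Hl1 Hr Ha) as [cc [N0 [K [Hc0 [Hh [HK [HK0 Hb]]]]]]].
  apply cont_of_eps. intros eps He.
  destruct (tail_small cc N0 Hc0 Hh (eps / 6)) as [N [HN1 HN2]]. lra.
  assert (Hp := cont_eps _ _ (pic_cont a c y0 Ha N i x Hx) (eps / 3) ltac:(lra)).
  assert (Hd : 0 < Rmin (x / 2) 1) by (apply Rmin_glb_lt; lra).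
  generalize (filter_and _ _ Hp (loc_ball x _ Hd)). apply filter_imp. intros y [Hy1 Hy2].
  assert (Hyx : l <= y <= r).
  { generalize (Rmin_l (x/2) 1) (Rmin_r (x/2) 1). intros. unfold Rabs in Hy2; destruct (Rcase_abs (y - x));
    unfold l, r, Rmin, Rmax; destruct (Rle_dec x 1); lra. }
  assert (Hxx : l <= x <= r) by (unfold l, r, Rmin, Rmax; destruct (Rle_dec x 1); lra).
  generalize (Hb N i y HN1 Hi Hyx) (Hb N i x HN1 Hi Hxx) (HN2 N (le_n _)). intros H1 H2 H3.
  replace (Ylim a c y0 i y - Ylim a c y0 i x) with
    ((Ylim a c y0 i y - pic a c y0 N i y) + (pic a c y0 N i y - pic a c y0 N i x) - (Ylim a c y0 i x - pic a c y0 N i x)) by ring.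
  eapply Rle_lt_trans. apply Rabs_triang. rewrite Rabs_Ropp.
  eapply Rle_lt_trans. apply Rplus_le_compat_r. apply Rabs_triang. lra.
Qed.

Lemma Ylim_int (a : R -> R) c y0 : (forall t, 0 < t -> continuous a t) ->
  forall i x, (i < 4)%nat -> 0 < x ->
  Ylim a c y0 i x = y0 i + RInt (fun t => Fs a c t (fun j => Ylim a c y0 j t) i) 1 x.
Proof.
  intros Ha i x Hi Hx.
  set (l := Rmin x 1 / 2). set (r := Rmax x 1 + 1).
  assert (Hl : 0 < l) by (unfold l, Rmin; destruct (Rle_dec x 1); lra).
  assert (Hl1 : l <= 1) by (unfold l, Rmin; destruct (Rle_dec x 1); lra).
  assert (Hr : 1 <= r) by (unfold r, Rmax; destruct (Rle_dec x 1); lra).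
  assert (Hxx : l <= x <= r) by (unfold l, r, Rmin, Rmax; destruct (Rle_dec x 1); lra).
  destruct (compact_conv a c y0 l r Hl Hl1 Hr Ha) as [cc [N0 [K [Hc0 [Hh [HK [HK0 Hb]]]]]]].
  apply Rminus_diag_uniq. apply small_eq. intros eps He.
  set (R0 := r - l).
  assert (HR0 : Rabs (x - 1) <= R0) by (unfold R0; unfold Rabs; destruct (Rcase_abs (x - 1)); lra).
  destruct (tail_small cc N0 Hc0 Hh (eps / (2 + 8 * K * R0 + 1))) as [N [HN1 HN2]].
  { apply Rdiv_lt_0_compat; auto. assert (0 <= K * R0) by (apply Rmult_le_pos; unfold R0; lra). lra. }
  assert (Hcont : forall t, 0 < t -> continuous (fun s => Fs a c s (fun j => Ylim a c y0 j s) i) t).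
  { intros t Ht. apply Fs_cont; auto. intros j Hj; apply Ylim_cont; auto. }
  assert (Hcont2 : forall t, 0 < t -> continuous (fun s => Fs a c s (fun j => pic a c y0 N j s) i) t).
  { intros t Ht. apply Fs_cont; auto. intros j Hj; apply pic_cont; auto. }
  assert (E1 : pic a c y0 (S N) i x - (y0 i + RInt (fun t => Fs a c t (fun j => Ylim a c y0 j t) i) 1 x) =
     RInt (fun t => Fs a c t (fun j => pic a c y0 N j t) i - Fs a c t (fun j => Ylim a c y0 j t) i) 1 x).
  { change (pic a c y0 (S N) i x) with (y0 i + RInt (fun t => Fs a c t (fun j => pic a c y0 N j t) i) 1 x).
    rewrite (RInt_minus (V:=R_CompleteNormedModule)).
    - simpl. unfold minus, plus, opp; simpl. ring.
    - apply ex_RInt_cont; auto; lra.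
    - apply ex_RInt_cont; auto; lra. }
  assert (B1 : Rabs (RInt (fun t => Fs a c t (fun j => pic a c y0 N j t) i - Fs a c t (fun j => Ylim a c y0 j t) i) 1 x)
     <= (K * (4 * (2 * cc N))) * Rabs (x - 1) ^ 1 / INR 1).
  { apply RInt_pow_bound.
    - intros t Ht. apply cont_minus. apply Hcont2. apply (between_pos x); auto. apply Hcont. apply (between_pos x); auto.
    - intros t Ht. assert (Ht' : l <= t <= r) by (apply (between_lr l r x t); auto).
      rewrite Fs_lin. simpl. rewrite Rmult_1_r. eapply Rle_trans. apply Fs_bound.
      apply Rmult_le_compat. generalize (Rabs_pos (a t)) (Rabs_pos c); lra. apply S4_ge0. apply HK; auto.
      apply S4_le. intros j Hj. rewrite <- Rabs_Ropp. replace (- (pic a c y0 N j t - Ylim a c y0 j t)) with (Ylim a c y0 j t - pic a c y0 N j t) by ring.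
      apply Hb; auto. }
  rewrite <- E1 in B1.
  generalize (Hb (S N) i x ltac:(lia) Hi Hxx) (HN2 N (le_n _)) (Hh N HN1) (Hc0 N). intros H1 H2 H3 H4.
  replace (Rabs (x - 1) ^ 1) with (Rabs (x - 1)) in B1 by ring. change (INR 1) with 1 in B1. rewrite Rdiv_1_r in B1.
  set (I := y0 i + RInt (fun t => Fs a c t (fun j => Ylim a c y0 j t) i) 1 x) in *.
  replace (Ylim a c y0 i x - I) with ((Ylim a c y0 i x - pic a c y0 (S N) i x) + (pic a c y0 (S N) i x - I)) by ring.
  eapply Rle_lt_trans. apply Rabs_triang.
  assert (HKR : K * (4 * (2 * cc N)) * Rabs (x - 1) <= 8 * K * R0 * cc N).
  { replace (8 * K * R0 * cc N) with (K * (4 * (2 * cc N)) * R0) by ring. apply Rmult_le_compat_l; auto.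
    apply Rmult_le_pos; lra. }
  assert (HKR0 : 0 <= 8 * K * R0) by (unfold R0; assert (0 <= K * (r - l)) by (apply Rmult_le_pos; lra); lra).
  assert (cc N * (2 + 8 * K * R0 + 1) < eps).
  { apply (Rmult_lt_compat_r (2 + 8 * K * R0 + 1)) in H2. 2: lra.
    replace (eps / (2 + 8 * K * R0 + 1) * (2 + 8 * K * R0 + 1)) with eps in H2 by (field; lra). auto. }
  nra.
Qed.

Lemma ode_exists (a : R -> R) c y0 : (forall t, 0 < t -> continuous a t) ->
  forall i, (i < 4)%nat -> Ylim a c y0 i 1 = y0 i /\
  forall x, 0 < x -> is_derive (Ylim a c y0 i) x (Fs a c x (fun j => Ylim a c y0 j x) i).
Proof.
  intros Ha i Hi. split.
  - rewrite Ylim_int; auto. rewrite RInt_point. unfold zero; simpl. ring. lra.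
  - intros x Hx.
    apply is_derive_ext_loc with (f := fun y => y0 i + RInt (fun t => Fs a c t (fun j => Ylim a c y0 j t) i) 1 y).
    { generalize (loc_pos x Hx). apply filter_imp. intros y Hy. rewrite <- Ylim_int; auto. }
    replace (Fs a c x (fun j => Ylim a c y0 j x) i) with (plus zero (Fs a c x (fun j => Ylim a c y0 j x) i))
      by (unfold plus, zero; simpl; ring).
    apply (is_derive_plus (fun _ : R => y0 i)). apply (is_derive_const (K:=R_AbsRing) (V:=R_NormedModule)).
    apply RInt_derive_pos; auto. intros t Ht. apply Fs_cont; auto. intros j Hj; apply Ylim_cont; auto.
Qed.

Ltac fixD := repeat match goal with |- context [Derive (fun x0 => ?f x0) ?y] => change (Derive (fun x0 => f x0) y) with (Derive f y) end.

Lemma comp_facts (b kappa Bf p P Rr : R -> R) :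
  (forall x, 0 < x -> ex_derive b x) ->
  (forall x, 0 < x -> is_derive Bf x (b x)) ->
  (forall x, 0 < x -> is_derive p x (P x)) ->
  (forall x, 0 < x -> is_derive P x (Rr x)) ->
  forall x, 0 < x ->
    ex_derive (fun y => 2 * exp (Bf y) * p y) x /\
    ex_derive (Derive (fun y => 2 * exp (Bf y) * p y)) x /\
    Lstar b kappa (fun y => 2 * exp (Bf y) * p y) x =
      exp (Bf x) * (Rr x - (b x ^ 2 + Derive b x + 2 * kappa x) * p x).
Proof.
  intros Hb HB Hp HP x Hx.
  assert (D1 : forall y, 0 < y -> is_derive (fun y => 2 * exp (Bf y) * p y) y (2 * exp (Bf y) * (b y * p y + P y))).
  { intros y Hy. assert (E1 := HB y Hy). assert (E2 := Hp y Hy).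
    apply is_derive_ext with (f := fun y => 2 * exp (Bf y) * p y). reflexivity.
    auto_derive. split. eexists; eauto. split; auto. eexists; eauto. fixD.
    rewrite (is_derive_unique _ _ _ E1), (is_derive_unique _ _ _ E2). ring. }
  assert (DD : locally x (fun y => Derive (fun y => 2 * exp (Bf y) * p y) y = 2 * exp (Bf y) * (b y * p y + P y))).
  { generalize (loc_pos x Hx). apply filter_imp. intros y Hy. apply is_derive_unique. auto. }
  assert (D2 : is_derive (fun y => 2 * exp (Bf y) * (b y * p y + P y)) x
     (2 * exp (Bf x) * (b x * (b x * p x + P x) + Derive b x * p x + b x * P x + Rr x))).
  { assert (E1 := HB x Hx). assert (E2 := Hp x Hx). assert (E3 := HP x Hx).
    assert (E4 := Hb x Hx).
    auto_derive. repeat split; first [exact E4 | exists (b x); exact E1 | exists (P x); exact E2 | exists (Rr x); exact E3 | auto]. fixD.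
    rewrite (is_derive_unique _ _ _ E1), (is_derive_unique _ _ _ E2), (is_derive_unique _ _ _ E3). ring. }
  split. eexists; apply D1; auto.
  split. eexists. eapply is_derive_ext_loc. 2: apply D2.
  { generalize DD. apply filter_imp. intros y Hy. auto. }
  unfold Lstar.
  assert (EQ : Derive (Derive (fun y => 2 * exp (Bf y) * p y)) x =
     2 * exp (Bf x) * (b x * (b x * p x + P x) + Derive b x * p x + b x * P x + Rr x)).
  { rewrite (Derive_ext_loc _ _ _ DD). apply is_derive_unique. exact D2. }
  rewrite EQ.
  assert (D3 : is_derive (fun y => b y * (2 * exp (Bf y) * p y)) x
     (Derive b x * (2 * exp (Bf x) * p x) + b x * (2 * exp (Bf x) * (b x * p x + P x)))).
  { apply (is_derive_mult b (fun y => 2 * exp (Bf y) * p y)). apply Derive_correct, Hb; auto. apply D1; auto.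
    intros; apply Rmult_comm. }
  replace (Derive (fun y => b y * (2 * exp (Bf y) * p y)) x) with
     (Derive b x * (2 * exp (Bf x) * p x) + b x * (2 * exp (Bf x) * (b x * p x + P x))).
  match goal with |- ?A = ?B => change (@eq R A B) end; field. symmetry. apply is_derive_unique. exact D3.
Qed.

Definition Vf (b kappa : R -> R) x := b x ^ 2 + Derive b x + 2 * kappa x.

Lemma transfer (b kappa Bf p P q Q : R -> R) (al be : R) :
  (forall x, 0 < x -> ex_derive b x) ->
  (forall x, 0 < x -> is_derive Bf x (b x)) ->
  (forall x, 0 < x -> is_derive p x (P x)) ->
  (forall x, 0 < x -> is_derive P x ((Vf b kappa x + 2 * al) * p x - 2 * be * q x)) ->
  (forall x, 0 < x -> is_derive q x (Q x)) ->
  (forall x, 0 < x -> is_derive Q x ((Vf b kappa x + 2 * al) * q x + 2 * be * p x)) ->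
  is_eigensol b kappa al be (fun x => 2 * exp (Bf x) * p x) (fun x => 2 * exp (Bf x) * q x).
Proof.
  intros Hb HB Hp HP Hq HQ.
  assert (Cp := comp_facts b kappa Bf p P _ Hb HB Hp HP).
  assert (Cq := comp_facts b kappa Bf q Q _ Hb HB Hq HQ).
  split; [|split].
  - intros x Hx. destruct (Cp x Hx) as [H1 [H2 _]]. auto.
  - intros x Hx. destruct (Cq x Hx) as [H1 [H2 _]]. auto.
  - intros x Hx. destruct (Cp x Hx) as [_ [_ H3]]. destruct (Cq x Hx) as [_ [_ H4]].
    rewrite H3, H4. unfold Vf. split; ring.
Qed.

Lemma B_derive (b : R -> R) : (forall x, 0 < x -> ex_derive b x) ->
  forall x, 0 < x -> is_derive (fun y => RInt b 1 y) x (b x).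
Proof.
  intros Hb x Hx. apply RInt_derive_pos; auto.
  intros t Ht. apply (ex_derive_continuous (K:=R_AbsRing) (V:=R_NormedModule)). auto.
Qed.

Lemma gen_lim (f : R -> R) : ex_RInt_gen f (at_point 1) (Rbar_locally p_infty) ->
  exists l, forall eps, 0 < eps -> exists M, forall X, M < X -> Rabs (RInt f 1 X - l) < eps.
Proof.
  intros [l Hl]. exists l. intros eps He.
  specialize (Hl (fun y => Rabs (y - l) < eps) (loc_ball l eps He)).
  destruct Hl as [Q Rr HQ HR HQR]. destruct HR as [M HM].
  exists M. intros X HX. destruct (HQR 1 X HQ (HM X HX)) as [y [Hy1 Hy2]].
  simpl in Hy1. rewrite (is_RInt_unique _ _ _ _ Hy1). exact Hy2.
Qed.

Lemma RInt_nonneg (f : R -> R) a b : 0 < a -> a <= b -> (forall t, 0 < t -> continuous f t) ->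
  (forall t, a <= t <= b -> 0 <= f t) -> 0 <= RInt f a b.
Proof.
  intros Ha Hab Hc Hf. apply RInt_ge_0; auto. apply ex_RInt_cont; auto; lra.
  intros; apply Hf; lra.
Qed.

Lemma RInt_split (f : R -> R) a b c : 0 < a -> 0 < b -> 0 < c -> (forall t, 0 < t -> continuous f t) ->
  RInt f a c = RInt f a b + RInt f b c.
Proof.
  intros Ha Hb Hc Hf. symmetry. apply (RInt_Chasles (V:=R_CompleteNormedModule)); apply ex_RInt_cont; auto.
Qed.

Lemma L2_bounds (f : R -> R) : ex_RInt_gen f (at_point 1) (Rbar_locally p_infty) ->
  (forall t, 0 < t -> continuous f t) -> (forall t, 0 < t -> 0 <= f t) ->
  exists l, (forall X, 1 <= X -> RInt f 1 X <= l) /\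
    (forall eps, 0 < eps -> exists a, 1 <= a /\ forall X, a <= X -> RInt f a X <= eps).
Proof.
  intros Hg Hc Hf. destruct (gen_lim f Hg) as [l Hl]. exists l.
  assert (Hmono : forall X Y, 1 <= X -> X <= Y -> RInt f 1 X <= RInt f 1 Y).
  { intros X Y H1 H2. rewrite (RInt_split f 1 X Y); try lra; auto.
    generalize (RInt_nonneg f X Y ltac:(lra) H2 Hc ltac:(intros; apply Hf; lra)). lra. }
  assert (Hup : forall X, 1 <= X -> RInt f 1 X <= l).
  { intros X HX. apply Rnot_lt_le. intros Hlt.
    destruct (Hl (RInt f 1 X - l) ltac:(lra)) as [M HM].
    specialize (HM (Rmax M X + 1) ltac:(generalize (Rmax_l M X); lra)).
    generalize (Hmono X (Rmax M X + 1) HX ltac:(generalize (Rmax_r M X); lra)).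
    unfold Rabs in HM; destruct (Rcase_abs _) in HM; lra. }
  split; auto.
  intros eps He. destruct (Hl eps He) as [M HM].
  exists (Rmax 1 M + 1). split. generalize (Rmax_l 1 M); lra.
  intros X HX.
  assert (H1 : 1 <= Rmax 1 M + 1) by (generalize (Rmax_l 1 M); lra).
  generalize (HM (Rmax 1 M + 1) ltac:(generalize (Rmax_r 1 M); lra)) (Hup X ltac:(lra)).
  rewrite (RInt_split f 1 (Rmax 1 M + 1) X); try lra; auto.
  intros HA HB. unfold Rabs in HA; destruct (Rcase_abs _) in HA; lra.
Qed.

Definition sol (a : R -> R) (c : R) (p P q Q : R -> R) :=
  forall x, 0 < x -> is_derive p x (P x) /\ is_derive P x (a x * p x - c * q x) /\
    is_derive q x (Q x) /\ is_derive Q x (a x * q x + c * p x).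

Definition L2b (p q : R -> R) :=
  exists l, (forall a X, 1 <= a -> a <= X -> RInt (fun x => p x ^ 2 + q x ^ 2) a X <= l) /\
   (forall eps, 0 < eps -> exists a, 1 <= a /\ forall X, a <= X -> RInt (fun x => p x ^ 2 + q x ^ 2) a X <= eps).

Lemma deriv_cont (f : R -> R) (df : R) x : is_derive f x df -> continuous f x.
Proof. intros H. apply (ex_derive_continuous (K:=R_AbsRing) (V:=R_NormedModule)). eexists; eauto. Qed.

Lemma sol_cont a c p P q Q : sol a c p P q Q -> forall x, 0 < x ->
  continuous p x /\ continuous P x /\ continuous q x /\ continuous Q x.
Proof.
  intros H x Hx. destruct (H x Hx) as [H1 [H2 [H3 H4]]].
  repeat split; eapply deriv_cont; eauto.
Qed.

Lemma int_deriv (f df : R -> R) a b : 0 < a -> a <= b -> (forall x, 0 < x -> is_derive f x (df x)) ->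
  (forall x, 0 < x -> continuous df x) -> RInt df a b = f b - f a.
Proof.
  intros Ha Hab Hd Hc. apply is_RInt_unique.
  apply (is_RInt_derive (V:=R_CompleteNormedModule) f df a b).
  - intros x Hx. apply Hd. unfold Rmin in Hx; destruct (Rle_dec a b); lra.
  - intros x Hx. apply Hc. unfold Rmin in Hx; destruct (Rle_dec a b); lra.
Qed.

Lemma int_le (f g : R -> R) a b : 0 < a -> a <= b -> (forall t, 0 < t -> continuous f t) -> (forall t, 0 < t -> continuous g t) ->
  (forall x, a <= x <= b -> f x <= g x) -> RInt f a b <= RInt g a b.
Proof.
  intros Ha Hab Hf Hg H. apply RInt_le; auto. apply ex_RInt_cont; auto; lra. apply ex_RInt_cont; auto; lra.
  intros; apply H; lra.
Qed.

Lemma int_const (k a b : R) : RInt (fun _ => k) a b = k * (b - a).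
Proof. rewrite RInt_const. unfold scal; simpl. unfold mult; simpl. ring. Qed.

Lemma int_plus (f g : R -> R) a b : 0 < a -> 0 < b -> (forall t, 0 < t -> continuous f t) -> (forall t, 0 < t -> continuous g t) ->
  RInt (fun x => f x + g x) a b = RInt f a b + RInt g a b.
Proof.
  intros. apply (RInt_plus (V:=R_CompleteNormedModule)); apply ex_RInt_cont; auto.
Qed.

Lemma int_scal (f : R -> R) k a b : 0 < a -> 0 < b -> (forall t, 0 < t -> continuous f t) ->
  RInt (fun x => k * f x) a b = k * RInt f a b.
Proof.
  intros. apply (RInt_scal (V:=R_CompleteNormedModule)); apply ex_RInt_cont; auto.
Qed.

Lemma const_of_deriv0 (f : R -> R) : (forall x, 0 < x -> is_derive f x 0) -> forall X, 1 <= X -> f X = f 1.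
Proof.
  intros H X HX. assert (E := int_deriv f (fun _ => 0) 1 X ltac:(lra) HX H (fun _ _ => cont_const 0 _)).
  rewrite int_const in E. lra.
Qed.

Lemma cont_inv (f : R -> R) x : continuous f x -> f x <> 0 -> continuous (fun t => / f t) x.
Proof. intros; apply continuous_Rinv_comp; auto. Qed.
Lemma cont_div (f g : R -> R) x : continuous f x -> continuous g x -> g x <> 0 -> continuous (fun t => f t / g t) x.
Proof. intros. apply cont_mult; auto. apply cont_inv; auto. Qed.

Ltac nz := apply pow_nonzero; apply Rgt_not_eq; lra.
Ltac ct := match goal with
 | |- continuous (fun _ => ?c) _ => apply cont_const
 | |- continuous (fun t => t) _ => apply cont_id
 | |- continuous (fun t => _ + _) _ => apply cont_plus; ct
 | |- continuous (fun t => _ - _) _ => apply cont_minus; ct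
 | |- continuous (fun t => _ / _) _ => apply cont_div; [ct|ct|nz]
 | |- continuous (fun t => _ * _) _ => apply cont_mult; ct
 | |- continuous (fun t => - _) _ => apply cont_opp; ct
 | |- continuous (fun t => _ ^ _) _ => apply cont_pow; ct
 | |- continuous (fun t => / _) _ => apply cont_inv; [ct|nz]
 | |- continuous ?f ?x => first [assumption | auto | idtac]
 end.

Ltac subD := fixD; repeat match goal with
 | H : is_derive ?f ?x ?v |- _ => progress rewrite ?(is_derive_unique f x v H)
 end.
Ltac rR := match goal with |- ?A = ?B => change (@eq R A B) end.

Ltac exD := repeat match goal with
 | H : is_derive ?f ?x ?v |- ex_derive ?f ?x => exists v; exact H
 | H : is_derive ?f ?x ?v |- ex_derive (fun x0 => ?f x0) ?x => exists v; exact H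
 | |- _ /\ _ => split
 | |- True => exact I
 end.

Lemma wronsk a c p1 P1 q1 Q1 p2 P2 q2 Q2 : sol a c p1 P1 q1 Q1 -> sol a c p2 P2 q2 Q2 ->
  p1 1 = 1 -> P1 1 = 0 -> q1 1 = 0 -> Q1 1 = 0 -> p2 1 = 0 -> P2 1 = 1 -> q2 1 = 0 -> Q2 1 = 0 ->
  forall X, 1 <= X -> p1 X * P2 X - q1 X * Q2 X - P1 X * p2 X + Q1 X * q2 X = 1.
Proof.
  intros S1 S2 I1 I2 I3 I4 I5 I6 I7 I8 X HX.
  assert (E := const_of_deriv0 (fun x => p1 x * P2 x - q1 x * Q2 x - P1 x * p2 x + Q1 x * q2 x)).
  rewrite E; auto. rewrite I1, I2, I3, I4, I5, I6, I7, I8. ring.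
  intros x Hx. destruct (S1 x Hx) as [A1 [A2 [A3 A4]]]. destruct (S2 x Hx) as [B1 [B2 [B3 B4]]].
  auto_derive. exD. subD. rR. ring.
Qed.

Lemma int_nonneg (f : R -> R) a b : 0 < a -> a <= b -> (forall t, 0 < t -> continuous f t) ->
  (forall t, a <= t <= b -> 0 <= f t) -> 0 <= RInt f a b.
Proof. apply RInt_nonneg. Qed.

Lemma energy (a : R -> R) c K0 a0 p P q Q l :
  1 <= a0 -> 0 <= K0 -> (forall t, 0 < t -> continuous a t) -> (forall x, a0 <= x -> - K0 * x ^ 2 <= a x) ->
  sol a c p P q Q ->
  (forall X, a0 <= X -> RInt (fun x => p x ^ 2 + q x ^ 2) a0 X <= l) ->
  exists T, forall X, a0 <= X -> RInt (fun x => (P x ^ 2 + Q x ^ 2) / x ^ 2) a0 X <= T.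
Proof.
  intros Ha0 HK0 Ha Hlow S Hl.
  assert (Cp : forall t, 0 < t -> continuous p t) by (intros; apply (sol_cont a c p P q Q S); auto).
  assert (CP : forall t, 0 < t -> continuous P t) by (intros; apply (sol_cont a c p P q Q S); auto).
  assert (Cq : forall t, 0 < t -> continuous q t) by (intros; apply (sol_cont a c p P q Q S); auto).
  assert (CQ : forall t, 0 < t -> continuous Q t) by (intros; apply (sol_cont a c p P q Q S); auto).
  set (g := fun x => p x ^ 2 + q x ^ 2).
  set (Ef := fun x => (P x ^ 2 + Q x ^ 2) / x ^ 2).
  set (Hf := fun x => (p x * P x + q x * Q x) / x ^ 2).
  set (dH := fun x => (P x ^ 2 + Q x ^ 2 + a x * (p x ^ 2 + q x ^ 2)) / x ^ 2 - 2 * (p x * P x + q x * Q x) / x ^ 3).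
  assert (Cg : forall t, 0 < t -> continuous g t) by (intros t Ht; unfold g; generalize (Cp t Ht) (Cq t Ht); intros; ct).
  assert (CE : forall t, 0 < t -> continuous Ef t) by (intros t Ht; unfold Ef; generalize (CP t Ht) (CQ t Ht); intros; ct).
  assert (CdH : forall t, 0 < t -> continuous dH t) by (intros t Ht; unfold dH; generalize (Cp t Ht) (Cq t Ht) (CP t Ht) (CQ t Ht) (Ha t Ht); intros; ct).
  assert (DH : forall x, 0 < x -> is_derive Hf x (dH x)).
  { intros x Hx. destruct (S x Hx) as [A1 [A2 [A3 A4]]]. unfold Hf, dH.
    auto_derive. exD. apply Rgt_not_eq; nra. subD. rR. field. apply Rgt_not_eq; lra. }
  assert (Hl0 : 0 <= l) by (generalize (Hl a0 (Rle_refl _)); rewrite RInt_point; unfold zero; simpl; lra).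
  assert (Pt : forall x, a0 <= x -> / 2 * Ef x <= dH x + (K0 + 2) * g x).
  { intros x Hx. unfold Ef, dH, g.
    assert (Hx0 : 0 < x) by lra.
    assert (Hy : 0 < / x) by (apply Rinv_0_lt_compat; lra).
    set (y := / x) in *.
    assert (Ex : x = / y) by (unfold y; rewrite Rinv_inv; auto).
    assert (Hxy : x * y = 1) by (unfold y; field; lra).
    generalize (Hlow x Hx). intros Hax.
    assert (Hg0 : 0 <= p x ^ 2 + q x ^ 2) by nra.
    assert (Ay : a x * (p x ^ 2 + q x ^ 2) * y ^ 2 >= - K0 * (p x ^ 2 + q x ^ 2)).
    { assert (a x * y ^ 2 >= - K0). { replace (- K0) with (- K0 * x ^ 2 * y ^ 2). 2:{ replace (- K0 * x ^ 2 * y ^ 2) with (- K0 * (x * y) ^ 2) by ring. rewrite Hxy. ring. }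
        apply Rle_ge. apply Rmult_le_compat_r. nra. auto. }
      nra. }
    assert (Hy1 : y <= 1) by (unfold y; rewrite <- Rinv_1; apply Rinv_le_contravar; lra).
    replace ((P x ^ 2 + Q x ^ 2) / x ^ 2) with ((P x ^ 2 + Q x ^ 2) * y ^ 2) by (unfold y; field; lra).
    replace ((P x ^ 2 + Q x ^ 2 + a x * (p x ^ 2 + q x ^ 2)) / x ^ 2) with ((P x ^ 2 + Q x ^ 2) * y ^ 2 + a x * (p x ^ 2 + q x ^ 2) * y ^ 2) by (unfold y; field; lra).
    replace (2 * (p x * P x + q x * Q x) / x ^ 3) with (2 * (p x * P x + q x * Q x) * y ^ 3) by (unfold y; field; lra).
    assert (SOS : 0 <= y ^ 2 / 2 * ((P x - 2 * p x * y) ^ 2 + (Q x - 2 * q x * y) ^ 2)).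
    { apply Rmult_le_pos. unfold Rdiv. apply Rmult_le_pos. apply pow2_ge_0. lra. apply Rplus_le_le_0_compat; apply pow2_ge_0. }
    assert (Hy4 : (p x ^ 2 + q x ^ 2) * y ^ 4 <= p x ^ 2 + q x ^ 2).
    { rewrite <- (Rmult_1_r (p x ^ 2 + q x ^ 2)) at 2. apply Rmult_le_compat_l; auto.
      replace 1 with (1 ^ 4) by ring. apply pow_incr; lra. }
    nra. }
  assert (Int : forall X, a0 <= X -> / 2 * RInt Ef a0 X <= Hf X - Hf a0 + (K0 + 2) * l).
  { intros X HX.
    rewrite <- int_scal; try lra; auto.
    eapply Rle_trans. apply (int_le _ (fun x => dH x + (K0 + 2) * g x)); try lra.
    intros; ct; apply CE; auto. intros t Ht; generalize (CdH t Ht) (Cg t Ht); intros; ct.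
    intros; apply Pt; lra.
    rewrite int_plus; try lra; auto. rewrite int_scal; try lra; auto.
    rewrite (int_deriv Hf dH); try lra; auto.
    generalize (Hl X HX). intros. apply Rplus_le_compat_l. apply Rmult_le_compat_l. lra. assumption.
    intros t Ht; generalize (Cg t Ht); intros; ct. }
  exists (2 * (Rabs (Hf a0) + (K0 + 2) * l + 1)).
  intros X0 HX0. apply Rnot_lt_le. intros Hbig.
  assert (Hmono : forall x, X0 <= x -> RInt Ef a0 X0 <= RInt Ef a0 x).
  { intros x Hx. rewrite (RInt_split Ef a0 X0 x); try lra; auto.
    generalize (int_nonneg Ef X0 x ltac:(lra) Hx CE). intros Hn.
    assert (0 <= RInt Ef X0 x). apply Hn. intros t Ht. unfold Ef. apply Rmult_le_pos. nra.
    apply Rlt_le, Rinv_0_lt_compat. apply pow_lt; lra. lra. }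
  assert (Hs : forall x, X0 <= x -> 1 <= p x * P x + q x * Q x).
  { intros x Hx. generalize (Int x ltac:(lra)) (Hmono x Hx) (Rle_abs (- Hf a0)). rewrite Rabs_Ropp. intros.
    assert (H2 : 1 < Hf x) by lra. unfold Hf in H2.
    assert (1 <= x ^ 2) by (replace 1 with (1 ^ 2) by ring; apply pow_incr; lra).
    assert (0 < x ^ 2) by lra.
    apply (Rmult_lt_compat_r (x ^ 2)) in H2; auto.
    replace ((p x * P x + q x * Q x) / x ^ 2 * x ^ 2) with (p x * P x + q x * Q x) in H2 by (field; lra). nra. }
  assert (Hg2 : forall t, X0 + 1 <= t -> 2 <= g t).
  { intros t Ht.
    assert (E := int_deriv g (fun x => 2 * (p x * P x + q x * Q x)) X0 t ltac:(lra) ltac:(lra)).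
    assert (Ed : forall x, 0 < x -> is_derive g x (2 * (p x * P x + q x * Q x))).
    { intros x Hx. destruct (S x Hx) as [A1 [A2 [A3 A4]]]. unfold g. auto_derive. exD. subD. rR. ring. }
    specialize (E Ed). 
    assert (E2 : RInt (fun x => 2 * (p x * P x + q x * Q x)) X0 t = g t - g X0).
    { apply E. intros x Hx; generalize (Cp x Hx) (Cq x Hx) (CP x Hx) (CQ x Hx); intros; ct. }
    assert (0 <= g X0) by (unfold g; nra).
    assert (2 * (t - X0) <= RInt (fun x => 2 * (p x * P x + q x * Q x)) X0 t).
    { rewrite <- int_const. apply int_le; try lra. intros; ct. intros x Hx; generalize (Cp x Hx) (Cq x Hx) (CP x Hx) (CQ x Hx); intros; ct.
      intros x Hx. generalize (Hs x ltac:(lra)). lra. }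
    lra. }
  set (Y := X0 + 2 + l).
  generalize (Hl Y ltac:(unfold Y; lra)). fold g.
  rewrite (RInt_split g a0 (X0 + 1) Y); try lra; auto.
  assert (0 <= RInt g a0 (X0 + 1)) by (apply int_nonneg; [lra | lra | auto | intros; unfold g; nra]).
  assert (2 * (Y - (X0 + 1)) <= RInt g (X0 + 1) Y).
  { rewrite <- int_const. apply int_le; try (unfold Y; lra). intros; ct. auto. intros; apply Hg2; lra. }
  unfold Y in *. lra. unfold Y; lra.
Qed.

Lemma int_ln a b : 0 < a -> a <= b -> RInt (fun x => / x) a b = ln b - ln a.
Proof.
  intros Ha Hab. apply int_deriv; auto. intros; apply is_derive_ln; auto.
  intros x Hx. apply cont_inv. apply cont_id. lra.
Qed.

Lemma case_liminf (a : R -> R) c C z0 p1 P1 q1 Q1 p2 P2 q2 Q2 :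
  (forall t, 0 < t -> continuous a t) -> (forall x, z0 < x -> C * x ^ 2 <= a x) ->
  sol a c p1 P1 q1 Q1 -> sol a c p2 P2 q2 Q2 ->
  p1 1 = 1 -> P1 1 = 0 -> q1 1 = 0 -> Q1 1 = 0 -> p2 1 = 0 -> P2 1 = 1 -> q2 1 = 0 -> Q2 1 = 0 ->
  L2b p1 q1 -> L2b p2 q2 -> False.
Proof.
  intros Ha Hlow S1 S2 I1 I2 I3 I4 I5 I6 I7 I8 [l1 [L1 _]] [l2 [L2 _]].
  set (a0 := Rmax 1 (z0 + 1)).
  assert (Ha0 : 1 <= a0) by apply Rmax_l.
  assert (Hz : z0 + 1 <= a0) by apply Rmax_r.
  assert (Hlow' : forall x, a0 <= x -> - Rabs C * x ^ 2 <= a x).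
  { intros x Hx. eapply Rle_trans. 2: apply Hlow; lra. apply Rmult_le_compat_r. nra.
    generalize (Rle_abs (- C)). rewrite Rabs_Ropp. lra. }
  destruct (energy a c (Rabs C) a0 p1 P1 q1 Q1 l1 Ha0 (Rabs_pos C) Ha Hlow' S1) as [T1 HT1].
  { intros X HX. apply L1; lra. }
  destruct (energy a c (Rabs C) a0 p2 P2 q2 Q2 l2 Ha0 (Rabs_pos C) Ha Hlow' S2) as [T2 HT2].
  { intros X HX. apply L2; lra. }
  assert (W := wronsk a c p1 P1 q1 Q1 p2 P2 q2 Q2 S1 S2 I1 I2 I3 I4 I5 I6 I7 I8).
  assert (C1 := sol_cont a c p1 P1 q1 Q1 S1). assert (C2 := sol_cont a c p2 P2 q2 Q2 S2).
  set (g1 := fun x => p1 x ^ 2 + q1 x ^ 2). set (g2 := fun x => p2 x ^ 2 + q2 x ^ 2).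
  set (E1 := fun x => (P1 x ^ 2 + Q1 x ^ 2) / x ^ 2). set (E2 := fun x => (P2 x ^ 2 + Q2 x ^ 2) / x ^ 2).
  assert (Cg1 : forall t, 0 < t -> continuous g1 t) by (intros t Ht; destruct (C1 t Ht) as [? [? [? ?]]]; unfold g1; ct).
  assert (Cg2 : forall t, 0 < t -> continuous g2 t) by (intros t Ht; destruct (C2 t Ht) as [? [? [? ?]]]; unfold g2; ct).
  assert (CE1 : forall t, 0 < t -> continuous E1 t) by (intros t Ht; destruct (C1 t Ht) as [? [? [? ?]]]; unfold E1; ct).
  assert (CE2 : forall t, 0 < t -> continuous E2 t) by (intros t Ht; destruct (C2 t Ht) as [? [? [? ?]]]; unfold E2; ct).
  set (M := / 2 * (l1 + l2) + / 2 * (T1 + T2)).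
  set (X := a0 * exp (Rabs M + 1)).
  assert (HX : a0 <= X).
  { unfold X. rewrite <- (Rmult_1_r a0) at 1. apply Rmult_le_compat_l. lra.
    generalize (exp_ineq1_le (Rabs M + 1)) (Rabs_pos M). lra. }
  assert (Hln : ln X - ln a0 = Rabs M + 1).
  { unfold X. rewrite ln_mult, ln_exp. ring. lra. apply exp_pos. }
  assert (Hint : RInt (fun x => / x) a0 X <= RInt (fun x => / 2 * (g1 x + g2 x) + / 2 * (E1 x + E2 x)) a0 X).
  { apply int_le; try lra.
    - intros t Ht. apply cont_inv. apply cont_id. lra.
    - intros t Ht. generalize (Cg1 t Ht) (Cg2 t Ht) (CE1 t Ht) (CE2 t Ht). intros. ct.
    - intros x Hx. specialize (W x ltac:(lra)).
      assert (Hx0 : 0 < x) by lra.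
      unfold g1, g2, E1, E2.
      set (y := / x).
      replace ((P1 x ^ 2 + Q1 x ^ 2) / x ^ 2) with ((P1 x ^ 2 + Q1 x ^ 2) * y ^ 2) by (unfold y; field; lra).
      replace ((P2 x ^ 2 + Q2 x ^ 2) / x ^ 2) with ((P2 x ^ 2 + Q2 x ^ 2) * y ^ 2) by (unfold y; field; lra).
      assert (SOS : 0 <= (p1 x - P2 x * y) ^ 2 + (q1 x + Q2 x * y) ^ 2 + (p2 x + P1 x * y) ^ 2 + (q2 x - Q1 x * y) ^ 2).
      { repeat apply Rplus_le_le_0_compat; apply pow2_ge_0. }
      replace y with (y * 1) at 1 by ring. rewrite <- W. nra. }
  rewrite int_ln in Hint; try lra.
  rewrite int_plus, !int_scal, !int_plus in Hint; try lra; auto.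
  2:{ intros t Ht. generalize (Cg1 t Ht) (Cg2 t Ht); intros; ct. }
  2:{ intros t Ht. generalize (CE1 t Ht) (CE2 t Ht); intros; ct. }
  2:{ intros t Ht. generalize (Cg1 t Ht) (Cg2 t Ht); intros; ct. }
  2:{ intros t Ht. generalize (CE1 t Ht) (CE2 t Ht); intros; ct. }
  generalize (L1 a0 X Ha0 HX) (L2 a0 X Ha0 HX) (HT1 X HX) (HT2 X HX). fold g1 g2 E1 E2.
  intros. assert (A : ln X - ln a0 <= / 2 * (l1 + l2) + / 2 * (T1 + T2)) by (eapply Rle_trans; [exact Hint|]; apply Rplus_le_compat; apply Rmult_le_compat_l; try lra; apply Rplus_le_compat; assumption). generalize (Rle_abs M). unfold M in *. lra.
Qed.

Lemma discr (A B C : R) : 0 <= A -> (forall t, 0 <= A * t ^ 2 - 2 * B * t + C) -> B ^ 2 <= A * C.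
Proof.
  intros HA H. destruct (Req_dec A 0) as [E|E].
  - subst. destruct (Req_dec B 0) as [EB|EB]. subst. nra.
    exfalso. specialize (H ((C + 1) / (2 * B))). 
    replace (0 * ((C + 1) / (2 * B)) ^ 2 - 2 * B * ((C + 1) / (2 * B)) + C) with (-1) in H by (field; auto). lra.
  - assert (0 < A) by lra. specialize (H (B / A)).
    replace (A * (B / A) ^ 2 - 2 * B * (B / A) + C) with (C - B ^ 2 / A) in H by (field; lra).
    assert (B ^ 2 / A <= C) by lra.
    apply (Rmult_le_compat_l A) in H1; [|lra]. replace (A * (B ^ 2 / A)) with (B ^ 2) in H1 by (field; lra). lra.
Qed.

Lemma cauchy_schwarz (f g : R -> R) a b : 0 < a -> a <= b -> (forall t, 0 < t -> continuous f t) -> (forall t, 0 < t -> continuous g t) ->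
  (RInt (fun x => f x * g x) a b) ^ 2 <= RInt (fun x => f x ^ 2) a b * RInt (fun x => g x ^ 2) a b.
Proof.
  intros Ha Hab Hf Hg.
  apply discr.
  - apply int_nonneg; auto. intros; ct. intros; apply pow2_ge_0.
  - intros t.
    assert (E : RInt (fun x => (t * f x - g x) ^ 2) a b =
      RInt (fun x => f x ^ 2) a b * t ^ 2 - 2 * RInt (fun x => f x * g x) a b * t + RInt (fun x => g x ^ 2) a b).
    { replace (RInt (fun x => (t * f x - g x) ^ 2) a b) with (RInt (fun x => (t ^ 2 * f x ^ 2 + (- 2 * t) * (f x * g x)) + g x ^ 2) a b)
        by (apply RInt_ext; intros; rR; ring).
      rewrite int_plus, int_plus, !int_scal; try lra; auto; intros; ct.
      }
    rewrite <- E. apply int_nonneg; auto. intros; ct. intros; apply pow2_ge_0.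
Qed.

Lemma tail_mono (f : R -> R) a1 a X : 0 < a1 -> a1 <= a -> a <= X -> (forall t, 0 < t -> continuous f t) ->
  (forall t, 0 < t -> 0 <= f t) -> RInt f a X <= RInt f a1 X.
Proof.
  intros H1 H2 H3 Hc Hf. rewrite (RInt_split f a1 a X); try lra; auto.
  assert (0 <= RInt f a1 a) by (apply int_nonneg; auto; intros; apply Hf; lra). lra.
Qed.

Lemma case_weyl (a : R -> R) c al p1 P1 q1 Q1 p2 P2 q2 Q2 (w W : R -> R) :
  (forall t, 0 < t -> continuous a t) ->
  sol a c p1 P1 q1 Q1 -> sol a c p2 P2 q2 Q2 ->
  p1 1 = 1 -> P1 1 = 0 -> q1 1 = 0 -> Q1 1 = 0 -> p2 1 = 0 -> P2 1 = 1 -> q2 1 = 0 -> Q2 1 = 0 ->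
  (forall x, 0 < x -> is_derive w x (W x) /\ is_derive W x ((a x - 2 * al) * w x)) ->
  L2b p1 q1 -> L2b p2 q2 ->
  (forall a0, 1 <= a0 -> forall M, exists X, a0 <= X /\ M < RInt (fun x => w x ^ 2) a0 X) -> False.
Proof.
  intros Ha S1 S2 I1 I2 I3 I4 I5 I6 I7 I8 Sw [l1 [_ T1]] [l2 [_ T2]] Unb.
  assert (Wr := wronsk a c p1 P1 q1 Q1 p2 P2 q2 Q2 S1 S2 I1 I2 I3 I4 I5 I6 I7 I8).
  assert (C1 := sol_cont a c p1 P1 q1 Q1 S1). assert (C2 := sol_cont a c p2 P2 q2 Q2 S2).
  assert (Cw : forall t, 0 < t -> continuous w t) by (intros t Ht; eapply deriv_cont; apply (Sw t Ht)).
  assert (CW : forall t, 0 < t -> continuous W t) by (intros t Ht; eapply deriv_cont; apply (Sw t Ht)).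
  set (m := 2 * (4 * al ^ 2 + c ^ 2)).
  assert (Hm : 0 <= m) by (unfold m; nra).
  set (eps := / (16 * (m + 1))).
  assert (He : 0 < eps) by (unfold eps; apply Rinv_0_lt_compat; lra).
  assert (He16 : eps * (16 * (m + 1)) = 1) by (unfold eps; field; lra).
  destruct (T1 eps He) as [a1 [Ha1 Ta1]]. destruct (T2 eps He) as [a2 [Ha2 Ta2]].
  set (a0 := Rmax a1 a2).
  assert (Ha01 : a1 <= a0) by apply Rmax_l. assert (Ha02 : a2 <= a0) by apply Rmax_r.
  set (g1 := fun x => p1 x ^ 2 + q1 x ^ 2). set (g2 := fun x => p2 x ^ 2 + q2 x ^ 2).
  assert (Cg1 : forall t, 0 < t -> continuous g1 t) by (intros t Ht; destruct (C1 t Ht) as [? [? [? ?]]]; unfold g1; ct).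
  assert (Cg2 : forall t, 0 < t -> continuous g2 t) by (intros t Ht; destruct (C2 t Ht) as [? [? [? ?]]]; unfold g2; ct).
  assert (G1 : forall X, a0 <= X -> RInt g1 a0 X <= eps).
  { intros X HX. eapply Rle_trans. apply (tail_mono g1 a1); auto; try lra. intros; unfold g1; nra. apply Ta1; lra. }
  assert (G2 : forall X, a0 <= X -> RInt g2 a0 X <= eps).
  { intros X HX. eapply Rle_trans. apply (tail_mono g2 a2); auto; try lra. intros; unfold g2; nra. apply Ta2; lra. }
  set (zr1 := fun x => p1 x * W x - P1 x * w x). set (zi1 := fun x => q1 x * W x - Q1 x * w x).
  set (zr2 := fun x => p2 x * W x - P2 x * w x). set (zi2 := fun x => q2 x * W x - Q2 x * w x).
  assert (Id : forall x, 1 <= x -> w x = p2 x * zr1 x - q2 x * zi1 x - p1 x * zr2 x + q1 x * zi2 x).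
  { intros x Hx. specialize (Wr x Hx). unfold zr1, zi1, zr2, zi2.
    transitivity (w x * (p1 x * P2 x - q1 x * Q2 x - P1 x * p2 x + Q1 x * q2 x)). rewrite Wr; ring. ring. }
  set (U := fun X => RInt (fun x => w x ^ 2) a0 X).
  assert (CU2 : forall t, 0 < t -> continuous (fun x => w x ^ 2) t) by (intros t Ht; generalize (Cw t Ht); intros; ct).
  assert (Zb : forall (z pp qq : R -> R) (k1 k2 : R), (forall x, 0 < x -> is_derive z x ((k1 * pp x + k2 * qq x) * w x)) ->
     (forall t, 0 < t -> continuous pp t) -> (forall t, 0 < t -> continuous qq t) -> k1 ^ 2 + k2 ^ 2 <= m / 2 ->
     (forall X, a0 <= X -> RInt (fun x => pp x ^ 2 + qq x ^ 2) a0 X <= eps) ->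
     forall x, a0 <= x -> z x ^ 2 <= 2 * z a0 ^ 2 + 2 * m * eps * U x).
  { intros z pp qq k1 k2 Dz Cpp Cqq Hk Hg x Hx.
    assert (Ez : RInt (fun x => (k1 * pp x + k2 * qq x) * w x) a0 x = z x - z a0).
    { apply int_deriv; try lra; auto. intros t Ht; generalize (Cpp t Ht) (Cqq t Ht) (Cw t Ht); intros; ct. }
    assert (CS := cauchy_schwarz (fun x => k1 * pp x + k2 * qq x) w a0 x ltac:(lra) Hx
      ltac:(intros t Ht; generalize (Cpp t Ht) (Cqq t Ht); intros; ct) Cw).
    cbv beta in CS. rewrite Ez in CS.
    assert (Hphi : RInt (fun x => (k1 * pp x + k2 * qq x) ^ 2) a0 x <= m * RInt (fun x => pp x ^ 2 + qq x ^ 2) a0 x).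
    { rewrite <- int_scal; try lra. apply int_le; try lra.
      intros t Ht; generalize (Cpp t Ht) (Cqq t Ht); intros; ct.
      intros t Ht; generalize (Cpp t Ht) (Cqq t Ht); intros; ct.
      intros y Hy. set (u := pp y). set (v := qq y). assert (A1 : (k1 * u + k2 * v) ^ 2 <= 2 * (k1 ^ 2 * u ^ 2 + k2 ^ 2 * v ^ 2)) by (generalize (pow2_ge_0 (k1 * u - k2 * v)); intros; nra). assert (A2 : k1 ^ 2 * u ^ 2 + k2 ^ 2 * v ^ 2 <= (k1 ^ 2 + k2 ^ 2) * (u ^ 2 + v ^ 2)) by (generalize (pow2_ge_0 (k1 * v)) (pow2_ge_0 (k2 * u)); intros; nra). assert (A3 : (k1 ^ 2 + k2 ^ 2) * (u ^ 2 + v ^ 2) <= m / 2 * (u ^ 2 + v ^ 2)) by (apply Rmult_le_compat_r; [generalize (pow2_ge_0 u) (pow2_ge_0 v); lra | lra]). lra.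
      intros t Ht; generalize (Cpp t Ht) (Cqq t Ht); intros; ct. }
    assert (HU0 : 0 <= U x) by (apply int_nonneg; try lra; auto; intros; apply pow2_ge_0).
    assert (HI : 0 <= RInt (fun x => (k1 * pp x + k2 * qq x) ^ 2) a0 x) by (apply int_nonneg; try lra; intros; [ct | apply pow2_ge_0]; generalize (Cpp t H) (Cqq t H); intros; ct).
    assert ((z x - z a0) ^ 2 <= m * eps * U x).
    { eapply Rle_trans. exact CS. fold U. apply Rmult_le_compat_r; auto.
      eapply Rle_trans. exact Hphi. apply Rmult_le_compat_l; auto. }
    assert (z x ^ 2 <= 2 * z a0 ^ 2 + 2 * (z x - z a0) ^ 2) by (generalize (pow2_ge_0 (z a0 - (z x - z a0))); intros; nra).
    lra. }
  assert (Dr1 : forall x, 0 < x -> is_derive zr1 x ((-2 * al * p1 x + c * q1 x) * w x)).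
  { intros x Hx. destruct (S1 x Hx) as [A1 [A2 [A3 A4]]]. destruct (Sw x Hx) as [B1 B2]. unfold zr1. auto_derive. exD. subD. rR. ring. }
  assert (Di1 : forall x, 0 < x -> is_derive zi1 x ((-2 * al * q1 x + - c * p1 x) * w x)).
  { intros x Hx. destruct (S1 x Hx) as [A1 [A2 [A3 A4]]]. destruct (Sw x Hx) as [B1 B2]. unfold zi1. auto_derive. exD. subD. rR. ring. }
  assert (Dr2 : forall x, 0 < x -> is_derive zr2 x ((-2 * al * p2 x + c * q2 x) * w x)).
  { intros x Hx. destruct (S2 x Hx) as [A1 [A2 [A3 A4]]]. destruct (Sw x Hx) as [B1 B2]. unfold zr2. auto_derive. exD. subD. rR. ring. }
  assert (Di2 : forall x, 0 < x -> is_derive zi2 x ((-2 * al * q2 x + - c * p2 x) * w x)).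
  { intros x Hx. destruct (S2 x Hx) as [A1 [A2 [A3 A4]]]. destruct (Sw x Hx) as [B1 B2]. unfold zi2. auto_derive. exD. subD. rR. ring. }
  assert (Hk1 : (-2 * al) ^ 2 + c ^ 2 <= m / 2) by (unfold m; nra).
  assert (Hk2 : (-2 * al) ^ 2 + (- c) ^ 2 <= m / 2) by (unfold m; nra).
  assert (Cp1 : forall t, 0 < t -> continuous p1 t) by (intros t Ht; apply (C1 t Ht)).
  assert (Cq1 : forall t, 0 < t -> continuous q1 t) by (intros t Ht; apply (C1 t Ht)).
  assert (Cp2 : forall t, 0 < t -> continuous p2 t) by (intros t Ht; apply (C2 t Ht)).
  assert (Cq2 : forall t, 0 < t -> continuous q2 t) by (intros t Ht; apply (C2 t Ht)).
  assert (G1' : forall X, a0 <= X -> RInt (fun x => q1 x ^ 2 + p1 x ^ 2) a0 X <= eps).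
  { intros X HX. replace (RInt (fun x => q1 x ^ 2 + p1 x ^ 2) a0 X) with (RInt g1 a0 X). auto.
    apply RInt_ext; intros; unfold g1; rR; ring. }
  assert (G2' : forall X, a0 <= X -> RInt (fun x => q2 x ^ 2 + p2 x ^ 2) a0 X <= eps).
  { intros X HX. replace (RInt (fun x => q2 x ^ 2 + p2 x ^ 2) a0 X) with (RInt g2 a0 X). auto.
    apply RInt_ext; intros; unfold g2; rR; ring. }
  assert (Zr1 := Zb zr1 p1 q1 (-2 * al) c Dr1 Cp1 Cq1 Hk1 G1).
  assert (Zi1 := Zb zi1 q1 p1 (-2 * al) (- c) Di1 Cq1 Cp1 Hk2 G1').
  assert (Zr2 := Zb zr2 p2 q2 (-2 * al) c Dr2 Cp2 Cq2 Hk1 G2).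
  assert (Zi2 := Zb zi2 q2 p2 (-2 * al) (- c) Di2 Cq2 Cp2 Hk2 G2').
  set (Z0 := zr1 a0 ^ 2 + zi1 a0 ^ 2 + zr2 a0 ^ 2 + zi2 a0 ^ 2).
  assert (HZ0 : 0 <= Z0) by (unfold Z0; generalize (pow2_ge_0 (zr1 a0)) (pow2_ge_0 (zi1 a0)) (pow2_ge_0 (zr2 a0)) (pow2_ge_0 (zi2 a0)); lra).
  assert (Ha0 : 1 <= a0) by lra.
  assert (Main : forall X, a0 <= X -> U X <= 32 * eps * Z0).
  { intros X HX.
    assert (HUX : 0 <= U X) by (apply int_nonneg; try lra; auto; intros; apply pow2_ge_0).
    assert (Um : forall x, a0 <= x <= X -> U x <= U X).
    { intros x Hx. unfold U. rewrite (RInt_split _ a0 x X); try lra; auto.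
      assert (0 <= RInt (fun x => w x ^ 2) x X) by (apply int_nonneg; try lra; auto; intros; apply pow2_ge_0). lra. }
    set (K := 4 * (2 * Z0 + 8 * m * eps * U X)).
    assert (Pw : forall x, a0 <= x <= X -> w x ^ 2 <= K * (g1 x + g2 x)).
    { intros x Hx. rewrite (Id x ltac:(lra)).
      generalize (Zr1 x ltac:(lra)) (Zi1 x ltac:(lra)) (Zr2 x ltac:(lra)) (Zi2 x ltac:(lra)) (Um x Hx).
      intros Z1 Z2 Z3 Z4 Ux.
      assert (HUx : 0 <= U x) by (apply int_nonneg; try lra; auto; intros; apply pow2_ge_0).
      set (A := p2 x * zr1 x). set (B := q2 x * zi1 x). set (C := p1 x * zr2 x). set (D := q1 x * zi2 x).
      assert (S4i : (A - B - C + D) ^ 2 <= 4 * (A ^ 2 + B ^ 2 + C ^ 2 + D ^ 2)).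
      { generalize (pow2_ge_0 (A + B)) (pow2_ge_0 (A + C)) (pow2_ge_0 (A - D)) (pow2_ge_0 (B - C)) (pow2_ge_0 (B + D)) (pow2_ge_0 (C + D)). intros. nra. }
      set (zs := zr1 x ^ 2 + zi1 x ^ 2 + zr2 x ^ 2 + zi2 x ^ 2).
      assert (Hzs : zs <= 2 * Z0 + 8 * m * eps * U X).
      { unfold zs, Z0. assert (m * eps * U x <= m * eps * U X) by (apply Rmult_le_compat_l; [apply Rmult_le_pos; lra | lra]). lra. }
      assert (Hzs0 : 0 <= zs) by (unfold zs; generalize (pow2_ge_0 (zr1 x)) (pow2_ge_0 (zi1 x)) (pow2_ge_0 (zr2 x)) (pow2_ge_0 (zi2 x)); lra).
      assert (Hg : A ^ 2 + B ^ 2 + C ^ 2 + D ^ 2 <= (g1 x + g2 x) * zs).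
      { unfold A, B, C, D, g1, g2, zs.
        generalize (pow2_ge_0 (p1 x)) (pow2_ge_0 (q1 x)) (pow2_ge_0 (p2 x)) (pow2_ge_0 (q2 x))
          (pow2_ge_0 (zr1 x)) (pow2_ge_0 (zi1 x)) (pow2_ge_0 (zr2 x)) (pow2_ge_0 (zi2 x)). intros.
        replace ((p2 x * zr1 x) ^ 2) with (p2 x ^ 2 * zr1 x ^ 2) by ring.
        replace ((q2 x * zi1 x) ^ 2) with (q2 x ^ 2 * zi1 x ^ 2) by ring.
        replace ((p1 x * zr2 x) ^ 2) with (p1 x ^ 2 * zr2 x ^ 2) by ring.
        replace ((q1 x * zi2 x) ^ 2) with (q1 x ^ 2 * zi2 x ^ 2) by ring.
        nra. }
      assert (Hg0 : 0 <= g1 x + g2 x) by (unfold g1, g2; nra).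
      unfold K. 
      assert ((g1 x + g2 x) * zs <= (g1 x + g2 x) * (2 * Z0 + 8 * m * eps * U X)) by (apply Rmult_le_compat_l; auto).
      lra. }
    assert (Int : U X <= K * (RInt g1 a0 X + RInt g2 a0 X)).
    { rewrite <- int_plus; try lra; auto. rewrite <- int_scal; try lra.
      apply int_le; try lra; auto. intros t Ht; generalize (Cg1 t Ht) (Cg2 t Ht); intros; ct.
      intros t Ht; generalize (Cg1 t Ht) (Cg2 t Ht); intros; ct. }
    assert (HK0 : 0 <= K) by (unfold K; assert (0 <= m * eps * U X) by (apply Rmult_le_pos; [apply Rmult_le_pos|]; lra); lra).
    assert (Int2 : U X <= K * (2 * eps)).
    { eapply Rle_trans. exact Int. apply Rmult_le_compat_l; auto. generalize (G1 X HX) (G2 X HX); lra. }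
    unfold K in Int2.
    assert (H16 : 16 * m * eps <= 1) by nra.
    assert (Hes : eps <= / 16) by (apply (Rmult_le_reg_l 16); [lra|]; rewrite Rinv_r by lra; nra).
    assert (64 * m * eps ^ 2 * U X <= / 4 * U X).
    { replace (64 * m * eps ^ 2 * U X) with ((16 * m * eps) * (4 * eps) * U X) by ring.
      apply Rmult_le_compat_r; auto.
      replace (/ 4) with (1 * (4 * / 16)) by field.
      apply Rmult_le_compat; try lra. }
    nra. }
  destruct (Unb a0 Ha0 (32 * eps * Z0)) as [X [HX HM]].
  generalize (Main X HX). unfold U. lra.
Qed.

Lemma int_deriv_loc (f df : R -> R) a b : a <= b -> (forall x, a <= x <= b -> is_derive f x (df x)) ->
  (forall x, a <= x <= b -> continuous df x) -> RInt df a b = f b - f a.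
Proof.
  intros Hab Hd Hc. apply is_RInt_unique.
  apply (is_RInt_derive (V:=R_CompleteNormedModule) f df a b).
  - intros x Hx. apply Hd. unfold Rmin, Rmax in Hx; destruct (Rle_dec a b); lra.
  - intros x Hx. apply Hc. unfold Rmin, Rmax in Hx; destruct (Rle_dec a b); lra.
Qed.

Lemma int_le_loc (f g : R -> R) a b : a <= b -> (forall t, a <= t <= b -> continuous f t) -> (forall t, a <= t <= b -> continuous g t) ->
  (forall x, a <= x <= b -> f x <= g x) -> RInt f a b <= RInt g a b.
Proof.
  intros Hab Hf Hg H. apply RInt_le; auto.
  apply exRc. intros; apply Hf; unfold Rmin, Rmax in *; destruct (Rle_dec a b); lra.
  apply exRc. intros; apply Hg; unfold Rmin, Rmax in *; destruct (Rle_dec a b); lra.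
  intros; apply H; lra.
Qed.

Lemma w_facts (b : R -> R) : (forall x, 0 < x -> ex_derive b x /\ continuous (Derive b) x) ->
  let B : R -> R := fun y => RInt b 1 y in
  let S : R -> R := fun y => RInt (fun t => exp (-2 * B t)) 1 y in
  (forall x, 0 < x -> is_derive (fun y => exp (B y) * S y) x (b x * exp (B x) * S x + exp (- B x)) /\
     is_derive (fun y => b y * exp (B y) * S y + exp (- B y)) x ((b x ^ 2 + Derive b x) * (exp (B x) * S x))) /\
  (forall a0, 1 <= a0 -> forall M, exists X, a0 <= X /\ M < RInt (fun x => (exp (B x) * S x) ^ 2) a0 X).
Proof.
  intros Hb B S.
  assert (HB : forall x, 0 < x -> is_derive B x (b x)) by (apply B_derive; intros; apply Hb; auto).
  assert (CB : forall x, 0 < x -> continuous B x) by (intros; eapply deriv_cont; apply HB; auto).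
  assert (HS : forall x, 0 < x -> is_derive S x (exp (-2 * B x))).
  { intros x Hx. apply (RInt_derive_pos (fun t => exp (-2 * B t)) x); auto. intros t Ht.
    apply (continuous_comp (fun t => -2 * B t) exp t). generalize (CB t Ht); intros; ct. apply continuous_exp. }
  split.
  - intros x Hx. destruct (Hb x Hx) as [Hb1 Hb2]. assert (E1 := HB x Hx). assert (E2 := HS x Hx).
    assert (E3 : is_derive b x (Derive b x)) by (apply Derive_correct; auto).
    split.
    + auto_derive. exD. subD. rR. replace (exp (- B x)) with (exp (B x) * exp (-2 * B x)) by (rewrite <- exp_plus; f_equal; ring). ring.
    + auto_derive. exD. subD. rR. replace (exp (- B x)) with (exp (B x) * exp (-2 * B x)) by (rewrite <- exp_plus; f_equal; ring). ring.
  - intros a0 Ha0 M.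
    assert (CS : forall x, 0 < x -> continuous S x) by (intros; eapply deriv_cont; apply HS; auto).
    assert (Ce : forall t, 0 < t -> continuous (fun t => exp (-2 * B t)) t).
    { intros t Ht. apply (continuous_comp (fun t => -2 * B t) exp t). generalize (CB t Ht); intros; ct. apply continuous_exp. }
    assert (CeB : forall t, 0 < t -> continuous (fun t => exp (B t)) t).
    { intros t Ht. apply (continuous_comp B exp t). auto. apply continuous_exp. }
    assert (Spos : forall x, 1 < x -> 0 < S x).
    { intros x Hx. unfold S. apply RInt_gt_0; auto. intros; apply exp_pos. intros; apply Ce; lra. }
    set (a1 := a0 + 1).
    set (s0 := S a1).
    assert (Hs0 : 0 < s0) by (apply Spos; unfold a1; lra).
    set (X := a1 + (Rabs M + / s0 + 1)).
    assert (Hinv : 0 < / s0) by (apply Rinv_0_lt_compat; auto).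
    assert (HX1 : a1 <= X) by (unfold X; generalize (Rabs_pos M); lra).
    exists X. split. unfold a1 in HX1; lra.
    assert (Cw : forall t, 0 < t -> continuous (fun x => (exp (B x) * S x) ^ 2) t).
    { intros t Ht. generalize (CeB t Ht) (CS t Ht). intros. ct. }
    assert (T1 : RInt (fun x => (exp (B x) * S x) ^ 2) a1 X <= RInt (fun x => (exp (B x) * S x) ^ 2) a0 X).
    { apply tail_mono; auto; try (unfold a1; lra). intros; apply pow2_ge_0. }
    set (h := fun x => 2 - exp (-2 * B x) / S x ^ 2).
    assert (T2 : RInt h a1 X <= RInt (fun x => (exp (B x) * S x) ^ 2) a1 X).
    { apply int_le_loc; auto.
      - intros t Ht. assert (0 < S t) by (apply Spos; unfold a1 in Ht; lra). unfold h.
        generalize (Ce t ltac:(unfold a1 in Ht; lra)) (CS t ltac:(unfold a1 in Ht; lra)). intros. apply cont_minus. apply cont_const.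
        apply cont_div; auto. apply cont_pow; auto. apply pow_nonzero; lra.
      - intros t Ht; apply Cw; unfold a1 in Ht; lra.
      - intros x Hx. assert (0 < S x) by (apply Spos; unfold a1 in Hx; lra). unfold h.
        set (u := exp (B x) * S x).
        assert (Hu : 0 < u) by (unfold u; apply Rmult_lt_0_compat; auto; apply exp_pos).
        replace (exp (-2 * B x) / S x ^ 2) with ((/ u) ^ 2).
        2:{ unfold u. replace (-2 * B x) with (- (B x) + - (B x)) by ring. rewrite exp_plus, exp_Ropp. field. split; lra || (apply Rgt_not_eq, exp_pos). }
        assert (0 <= (u - / u) ^ 2) by apply pow2_ge_0.
        assert (u * / u = 1) by (field; lra). nra. }
    assert (T3 : RInt h a1 X = (2 * X + / S X) - (2 * a1 + / S a1)).
    { apply (int_deriv_loc (fun x => 2 * x + / S x)); auto.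
      - intros x Hx. assert (0 < S x) by (apply Spos; unfold a1 in Hx; lra). assert (E := HS x ltac:(unfold a1 in Hx; lra)).
        unfold h. auto_derive. exD. lra. subD. rR. field. lra.
      - intros t Ht. assert (0 < S t) by (apply Spos; unfold a1 in Ht; lra). unfold h.
        generalize (Ce t ltac:(unfold a1 in Ht; lra)) (CS t ltac:(unfold a1 in Ht; lra)). intros. apply cont_minus. apply cont_const.
        apply cont_div; auto. apply cont_pow; auto. apply pow_nonzero; lra. }
    assert (0 < / S X) by (apply Rinv_0_lt_compat, Spos; unfold a1 in HX1; lra).
    generalize (Rle_abs M). fold s0 in T3. unfold X in *. lra.
Qed.

Lemma L2_conv (b p q : R -> R) : (forall x, 0 < x -> ex_derive b x) ->
  (forall t, 0 < t -> continuous p t) -> (forall t, 0 < t -> continuous q t) ->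
  L2_near_infty b (fun x => 2 * exp (RInt b 1 x) * p x) (fun x => 2 * exp (RInt b 1 x) * q x) -> L2b p q.
Proof.
  intros Hb Cp Cq HL.
  set (Bf := fun y => RInt b 1 y : R).
  assert (CB : forall x, 0 < x -> continuous Bf x) by (intros; eapply deriv_cont; apply B_derive; auto).
  assert (CeB : forall t, 0 < t -> continuous (fun t => exp (Bf t)) t).
  { intros t Ht. apply (continuous_comp Bf exp t). auto. apply continuous_exp. }
  assert (CeB2 : forall t, 0 < t -> continuous (fun t => exp (-2 * Bf t)) t).
  { intros t Ht. apply (continuous_comp (fun t => -2 * Bf t) exp t). generalize (CB t Ht); intros; ct. apply continuous_exp. }
  set (f := fun x => ((2 * exp (Bf x) * p x) ^ 2 + (2 * exp (Bf x) * q x) ^ 2) * scale_dens b x).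
  assert (Cf : forall t, 0 < t -> continuous f t).
  { intros t Ht. unfold f, scale_dens. generalize (CeB t Ht) (CeB2 t Ht) (Cp t Ht) (Cq t Ht). intros. ct. }
  assert (Ef : forall x, f x = 4 * (p x ^ 2 + q x ^ 2)).
  { intros x. unfold f, scale_dens. fold (Bf x).
    replace (exp (-2 * Bf x)) with (/ (exp (Bf x) ^ 2)).
    field. apply Rgt_not_eq, exp_pos.
    replace (-2 * Bf x) with (- (Bf x) + - (Bf x)) by ring. rewrite exp_plus, exp_Ropp. field. apply Rgt_not_eq, exp_pos. }
  assert (Cg : forall t, 0 < t -> continuous (fun x => p x ^ 2 + q x ^ 2) t) by (intros t Ht; generalize (Cp t Ht) (Cq t Ht); intros; ct).
  assert (RE : forall a X, 0 < a -> 0 < X -> RInt f a X = 4 * RInt (fun x => p x ^ 2 + q x ^ 2) a X).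
  { intros a X Ha HX. rewrite <- int_scal; auto. apply RInt_ext. intros; rewrite Ef; reflexivity. }
  destruct (L2_bounds f HL Cf) as [l [Hl1 Hl2]].
  { intros t Ht. rewrite Ef. nra. }
  exists (l / 4). split.
  - intros a X Ha HX. eapply Rle_trans. apply (tail_mono _ 1); auto; try lra. intros; nra.
    generalize (Hl1 X ltac:(lra)). rewrite RE by lra. lra.
  - intros eps He. destruct (Hl2 eps He) as [a [Ha HX]]. exists a. split; auto.
    intros X HaX. generalize (HX X HaX). rewrite RE by lra.
    assert (0 <= RInt (fun x => p x ^ 2 + q x ^ 2) a X) by (apply int_nonneg; auto; try lra; intros; nra).
    lra.
Qed.

Definition y01 (i : nat) : R := match i with 0%nat => 1 | _ => 0 end.
Definition y02 (i : nat) : R := match i with 1%nat => 1 | _ => 0 end.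

Lemma sol_of_Ylim (a : R -> R) c y0 : (forall t, 0 < t -> continuous a t) ->
  sol a c (Ylim a c y0 0) (Ylim a c y0 1) (Ylim a c y0 2) (Ylim a c y0 3).
Proof.
  intros Ha x Hx.
  destruct (ode_exists a c y0 Ha 0 ltac:(lia)) as [_ D0].
  destruct (ode_exists a c y0 Ha 1 ltac:(lia)) as [_ D1].
  destruct (ode_exists a c y0 Ha 2 ltac:(lia)) as [_ D2].
  destruct (ode_exists a c y0 Ha 3 ltac:(lia)) as [_ D3].
  split; [|split; [|split]]; [apply D0 | apply D1 | apply D2 | apply D3]; auto.
Qed.

Lemma Ylim_init (a : R -> R) c y0 i : (forall t, 0 < t -> continuous a t) -> (i < 4)%nat -> Ylim a c y0 i 1 = y0 i.
Proof. intros Ha Hi. apply (ode_exists a c y0 Ha i Hi). Qed.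

Theorem lemma2p1 (b kappa : R -> R) :
  C1_pos b ->
  (forall x, 0 < x -> continuous kappa x) ->
  (forall x, 0 < x -> 0 <= kappa x) ->
  regular_at_0 b ->
  inaccessible_at_infty b ->
  ((exists C z0 : R, forall z, z0 < z ->
       C <= / (z ^ 2) * (b z ^ 2 + Derive b z + 2 * kappa z))
   \/ (forall x, 0 < x -> kappa x = 0)) ->
  limit_point_at_infty b kappa.
Proof.
  intros Hb Hk Hk0 _ _ Hcase [al [be LC]].
  assert (Hbd : forall x, 0 < x -> ex_derive b x) by (intros; apply Hb; auto).
  set (a := fun x => Vf b kappa x + 2 * al). set (c := 2 * be).
  assert (Ha : forall t, 0 < t -> continuous a t).
  { intros t Ht. destruct (Hb t Ht) as [H1 H2]. generalize (Hk t Ht). intros.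
    assert (continuous b t) by (apply (ex_derive_continuous (K:=R_AbsRing) (V:=R_NormedModule)); auto).
    unfold a, Vf. ct. }
  set (p1 := Ylim a c y01 0). set (P1 := Ylim a c y01 1). set (q1 := Ylim a c y01 2). set (Q1 := Ylim a c y01 3).
  set (p2 := Ylim a c y02 0). set (P2 := Ylim a c y02 1). set (q2 := Ylim a c y02 2). set (Q2 := Ylim a c y02 3).
  assert (S1 : sol a c p1 P1 q1 Q1) by apply sol_of_Ylim, Ha.
  assert (S2 : sol a c p2 P2 q2 Q2) by apply sol_of_Ylim, Ha.
  assert (HB := B_derive b Hbd).
  assert (L2of : forall p P q Q, sol a c p P q Q -> L2b p q).
  { intros p P q Q S.
    assert (E := transfer b kappa (fun y => RInt b 1 y) p P q Q al be Hbd HB).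
    apply (L2_conv b); auto. intros; apply (sol_cont a c p P q Q S); auto. intros; apply (sol_cont a c p P q Q S); auto.
    apply LC. apply E; intros x Hx; apply (S x Hx). }
  assert (L1 := L2of _ _ _ _ S1). assert (L2 := L2of _ _ _ _ S2).
  assert (I1 : p1 1 = 1) by (apply Ylim_init; auto).
  assert (I2 : P1 1 = 0) by (apply Ylim_init; auto).
  assert (I3 : q1 1 = 0) by (apply Ylim_init; auto).
  assert (I4 : Q1 1 = 0) by (apply Ylim_init; auto).
  assert (I5 : p2 1 = 0) by (apply Ylim_init; auto).
  assert (I6 : P2 1 = 1) by (apply Ylim_init; auto).
  assert (I7 : q2 1 = 0) by (apply Ylim_init; auto).
  assert (I8 : Q2 1 = 0) by (apply Ylim_init; auto).
  destruct Hcase as [[C [z0 Hz]] | Hk00].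
  - apply (case_liminf a c (C - 2 * Rabs al) (Rmax z0 1) p1 P1 q1 Q1 p2 P2 q2 Q2 Ha); auto.
    intros x Hx. assert (Hx0 : z0 < x) by (generalize (Rmax_l z0 1); lra).
    assert (Hx1 : 1 < x) by (generalize (Rmax_r z0 1); lra).
    specialize (Hz x Hx0). unfold a, Vf.
    assert (0 < x ^ 2) by (apply pow_lt; lra).
    apply (Rmult_le_compat_l (x ^ 2)) in Hz; [|lra].
    rewrite <- Rmult_assoc, Rinv_r in Hz by lra.
    assert (1 <= x ^ 2) by (replace 1 with (1 ^ 2) by ring; apply pow_incr; lra).
    generalize (Rle_abs al) (Rle_abs (- al)). rewrite Rabs_Ropp. intros.
    assert (Rabs al <= Rabs al * x ^ 2) by (rewrite <- (Rmult_1_r (Rabs al)) at 1; apply Rmult_le_compat_l; auto; apply Rabs_pos).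
    nra.
  - destruct (w_facts b Hb) as [Wd Unb].
    apply (case_weyl a c al p1 P1 q1 Q1 p2 P2 q2 Q2
      (fun y => exp (RInt b 1 y) * RInt (fun t => exp (-2 * RInt b 1 t)) 1 y)
      (fun y => b y * exp (RInt b 1 y) * RInt (fun t => exp (-2 * RInt b 1 t)) 1 y + exp (- RInt b 1 y))
      Ha S1 S2 I1 I2 I3 I4 I5 I6 I7 I8); auto.
    intros x Hx. destruct (Wd x Hx) as [D1 D2]. split; auto.
    replace (a x - 2 * al) with (b x ^ 2 + Derive b x) by (unfold a, Vf; rewrite Hk00; auto; ring). auto.
Qed.
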